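(* Let $D\subseteq\mathbb{R}$ be an open interval, let $f:D\to\mathbb{R}$ be a sufficiently differentiable function, and let $\alpha\in D$ be a simple root of $f(x)=0$ (i.e. $f(\alpha)=0$, $f'(\alpha)\neq 0$). Fix $\kappa\in\mathbb{R}$, $\kappa\neq 0$, and let $G(t_1,t_2)$ and $H(s_1,s_2)$ be real-valued functions of two real variables, sufficiently differentiable near $(0,0)$. Consider the iteration, starting from $x_0$, $$ \begin{aligned} w_n &= x_n-\kappa f(x_n),\\ y_n &= x_n-\kappa\,\frac{f(x_n)^2}{f(x_n)-f(w_n)},\\ z_n &= y_n-\kappa\,\frac{f(y_n)\,f(x_n)}{f(x_n)-f(w_n)}\;G(t_1,t_2),\\ x_{n+1} &= z_n-\frac{f(z_n)}{\psi_n}\;H(s_1,s_2), \end{aligned} $$ where $t_1=\frac{f(y_n)}{f(x_n)}$, $t_2=\frac{f(y_n)}{f(w_n)}$, $s_1=\frac{f(z_n)}{f(x_n)}$, $s_2=\frac{f(z_n)}{f(w_n)}$, and $$ \psi_n=\frac{b(b-c)}{(a-b)(a-c)}\,\frac{v_1}{a}+\frac{-3b^2+2bc+2ab-ac}{(a-b)(b-c)}\,\frac{v_2}{b}+\frac{b(b-a)}{(a-c)(b-c)}\,\frac{v_3}{c}, $$ with $v_1=f(x_n)-f(y_n)$, $v_2=f(z_n)-f(y_n)$, $v_3=f(w_n)-f(y_n)$, $a=x_n-y_n$, $b=z_n-y_n$, $c=w_n-y_n$. If $x_0$ is chosen sufficiently close to $\alpha$, then the iterates $x_n$ converge to $\alpha$.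 Moreover, if $$ G(0,0)=1,\quad \frac{\partial G}{\partial t_1}(0,0)=1,\quad \frac{\partial G}{\partial t_2}(0,0)=1,\quad H(0,0)=1,\quad \frac{\partial H}{\partial s_1}(0,0)=0,\quad \frac{\partial H}{\partial s_2}(0,0)=0, $$ and the second partial derivatives $\frac{\partial^2 G}{\partial t_1^2},\frac{\partial^2 G}{\partial t_2^2},\frac{\partial^2 G}{\partial t_1\partial t_2},\frac{\partial^2 H}{\partial s_1^2},\frac{\partial^2 H}{\partial s_2^2},\frac{\partial^2 H}{\partial s_1\partial s_2}$ are bounded at $(0,0)$, then this iterative scheme has order of convergence at least eight, i.e. $|x_{n+1}-\alpha|=O(|x_n-\alpha|^8)$.
   Context: The quantity $\psi_n$ is the derivative at $z_n$ of the cubic polynomial interpolating $f$ at the four points $x_n,w_n,y_n,z_n$; it serves as a derivative-free approximation of $f'(z_n)$. Order of convergence $p$ means $|x_{n+1}-\alpha|\le C|x_n-\alpha|^p$ for some constant $C$ and all $n$ large enough. *)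

(* Defs.v *)
From Stdlib Require Import Reals.
From Coquelicot Require Import Coquelicot.
Open Scope R_scope.

Definition inD (lo hi : Rbar) (x : R) : Prop :=
  Rbar_lt lo (Finite x) /\ Rbar_lt (Finite x) hi.

Definition partial1 (G : R * R -> R) (p : R * R) : R :=
  Derive (fun t => G (t, snd p)) (fst p).
Definition partial2 (G : R * R -> R) (p : R * R) : R :=
  Derive (fun t => G (fst p, t)) (snd p).

Fixpoint Ck2 (k : nat) (U : R * R -> Prop) (G : R * R -> R) : Prop :=
  (forall p, U p -> continuous G p) /\
  match k with
  | O => True
  | S k' =>
      (forall p, U p -> ex_derive (fun t => G (t, snd p)) (fst p)
                     /\ ex_derive (fun t => G (fst p, t)) (snd p))
      /\ Ck2 k' U (partial1 G) /\ Ck2 k' U (partial2 G)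
  end.

(* "Sufficiently differentiable near (0,0)": C^infinity on some open square
   around the origin. *)
Definition smooth_near0 (G : R * R -> R) : Prop :=
  exists r, 0 < r /\
    forall k, Ck2 k (fun p => Rabs (fst p) < r /\ Rabs (snd p) < r) G.

Definition w_of (f : R -> R) (kappa x : R) : R := x - kappa * f x.

Definition y_of (f : R -> R) (kappa x : R) : R :=
  x - kappa * (f x ^ 2 / (f x - f (w_of f kappa x))).

Definition z_of (f : R -> R) (kappa : R) (G : R * R -> R) (x : R) : R :=
  let w := w_of f kappa x in
  let y := y_of f kappa x in
  y - kappa * (f y * f x / (f x - f w)) * G (f y / f x, f y / f w).

(* Derivative at z of the cubic interpolating f at x, w, y, z. *)
Definition psi_of (f : R -> R) (x y z w : R) : R :=
  let v1 := f x - f y in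
  let v2 := f z - f y in
  let v3 := f w - f y in
  let a := x - y in
  let b := z - y in
  let c := w - y in
  (b * (b - c)) / ((a - b) * (a - c)) * (v1 / a)
  + (- 3 * b ^ 2 + 2 * b * c + 2 * a * b - a * c) / ((a - b) * (b - c)) * (v2 / b)
  + (b * (b - a)) / ((a - c) * (b - c)) * (v3 / c).

Definition step (f : R -> R) (kappa : R) (G H : R * R -> R) (x : R) : R :=
  let w := w_of f kappa x in
  let y := y_of f kappa x in
  let z := z_of f kappa G x in
  z - f z / psi_of f x y z w * H (f z / f x, f z / f w).

Definition step_defined (f : R -> R) (kappa : R) (G : R * R -> R) (x : R) : Prop :=
  let w := w_of f kappa x in
  let y := y_of f kappa x in
  let z := z_of f kappa G x in
  let a := x - y in
  let b := z - y in
  let c := w - y in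
  f x <> 0 /\ f w <> 0 /\ f x - f w <> 0 /\
  a <> 0 /\ b <> 0 /\ c <> 0 /\ a - b <> 0 /\ a - c <> 0 /\ b - c <> 0 /\
  psi_of f x y z w <> 0.

(* Main.v *)
Require Import Defs.
From Stdlib Require Import Reals Lra Lia Psatz Classical.
From Coquelicot Require Import Coquelicot.
Open Scope R_scope.

Lemma ball_R (x y e : R) : ball x e y <-> Rabs (y - x) < e.
Proof. split; intro H; exact H. Qed.

Lemma sum_zero_pow (g : nat -> R) (n : nat) :
  sum_f_R0 (fun m => 0 ^ m / INR (Factorial.fact m) * g m) n = g O.
Proof.
  induction n; simpl.
  - simpl. field.
  - rewrite IHn. unfold Rdiv. rewrite !Rmult_0_l. ring.
Qed.

Section Taylor.
Variables (f : R -> R) (alpha r1 : R).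
Hypothesis HD : forall u, Rabs (u - alpha) < r1 -> forall n, ex_derive_n f n u.

Lemma loc_ok (r0 u : R) (n : nat) : r0 < r1 -> Rabs (u - alpha) <= r0 ->
  locally u (fun y => forall k : nat, (k <= n)%nat -> ex_derive_n f k y).
Proof.
  intros Hr Hu.
  assert (Hp : 0 < r1 - r0) by lra.
  exists (mkposreal _ Hp). intros y Hy k _. apply HD.
  apply ball_R in Hy. simpl in Hy.
  pose proof (Rabs_triang (y - u) (u - alpha)).
  assert (Hy' : Rabs (y - u) < r1 - r0) by exact Hy.
  replace (y - u + (u - alpha)) with (y - alpha) in H by ring. lra.
Qed.

Lemma fin_bound (h D B F : R) (m : nat) : 0 < F -> Rabs D <= B ->
  Rabs (h ^ m / F * D) <= B * Rabs h ^ m / F.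
Proof.
  intros HF HD'. rewrite Rabs_mult. unfold Rdiv. rewrite Rabs_mult, <- RPow_abs.
  rewrite (Rabs_right (/ F)) by (apply Rle_ge; left; apply Rinv_0_lt_compat; lra).
  assert (0 <= Rabs h ^ m) by (apply pow_le, Rabs_pos).
  assert (0 < / F) by (apply Rinv_0_lt_compat; lra).
  apply Rle_trans with (Rabs h ^ m * / F * B).
  apply Rmult_le_compat_l; [apply Rmult_le_pos; lra | exact HD'].
  right; ring.
Qed.

Lemma taylor_bound (n : nat) (s t B r0 : R) : r0 < r1 ->
  Rabs (s - alpha) <= r0 -> Rabs (t - alpha) <= r0 ->
  (forall u, Rabs (u - alpha) <= r0 -> Rabs (Derive_n f (S n) u) <= B) ->
  Rabs (f t - sum_f_R0 (fun m => (t - s) ^ m / INR (Factorial.fact m) * Derive_n f m s) n)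
    <= B * Rabs (t - s) ^ (S n) / INR (Factorial.fact (S n)).
Proof.
  intros Hr Hs Ht HB.
  assert (Hfp : 0 < INR (Factorial.fact (S n))) by (apply lt_0_INR; apply Factorial.lt_O_fact).
  assert (Hconv : forall u, Rmin s t <= u <= Rmax s t -> Rabs (u - alpha) <= r0).
  { intros u [H1 H2]. apply Rabs_le. apply Rabs_le_between in Hs.
    apply Rabs_le_between in Ht.
    unfold Rmin, Rmax in *; destruct (Rle_dec s t); lra. }
  destruct (Rtotal_order s t) as [Hst | [Hst | Hst]].
  - destruct (Taylor_Lagrange f n s t Hst) as [zeta [Hz Heq]].
    { intros u Hu k _. apply HD.
      assert (Rabs (u - alpha) <= r0). { apply Hconv. unfold Rmin, Rmax.
        destruct (Rle_dec s t); lra. } lra. }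
    rewrite Heq.
    replace (sum_f_R0 (fun m : nat => (t - s) ^ m / INR (Factorial.fact m) * Derive_n f m s) n +
      (t - s) ^ S n / INR (Factorial.fact (S n)) * Derive_n f (S n) zeta -
      sum_f_R0 (fun m : nat => (t - s) ^ m / INR (Factorial.fact m) * Derive_n f m s) n)
      with ((t - s) ^ S n / INR (Factorial.fact (S n)) * Derive_n f (S n) zeta) by ring.
    assert (Hz' : Rabs (Derive_n f (S n) zeta) <= B).
    { apply HB, Hconv. unfold Rmin, Rmax; destruct (Rle_dec s t); lra. }
    apply fin_bound; assumption.
  - subst t. replace (s - s) with 0 by ring. rewrite sum_zero_pow. simpl.
    rewrite Rminus_diag, Rabs_R0. rewrite Rmult_0_l, Rmult_0_r. unfold Rdiv. lra.
  - set (g := fun y => f (- y)).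
    assert (Hlt : - s < - t) by lra.
    assert (Hg : forall u, - s <= u <= - t -> Rabs ((- u) - alpha) <= r0).
    { intros u Hu. apply Hconv. unfold Rmin, Rmax; destruct (Rle_dec s t); lra. }
    destruct (Taylor_Lagrange g n (- s) (- t) Hlt) as [zeta [Hz Heq]].
    { intros u Hu k _. apply ex_derive_n_comp_opp.
      apply (loc_ok r0 (- u) k Hr). apply Hg; lra. }
    unfold g in Heq. rewrite !Ropp_involutive in Heq.
    rewrite Heq.
    assert (Hsum : sum_f_R0 (fun m : nat => (- t - - s) ^ m / INR (Factorial.fact m) * Derive_n g m (- s)) n
      = sum_f_R0 (fun m : nat => (t - s) ^ m / INR (Factorial.fact m) * Derive_n f m s) n).
    { apply sum_eq. intros i Hi. unfold g.
      rewrite Derive_n_comp_opp.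
      2:{ rewrite Ropp_involutive. apply (loc_ok r0 s i Hr Hs). }
      rewrite Ropp_involutive.
      replace (- t - - s) with ((-1) * (t - s)) by ring. rewrite Rpow_mult_distr.
      assert ((-1) ^ i * (-1) ^ i = 1).
      { rewrite <- Rpow_mult_distr. replace (-1 * -1) with 1 by ring. apply pow1. }
      unfold Rdiv. transitivity ((t - s) ^ i * / INR (Factorial.fact i) * Derive_n f i s * ((-1) ^ i * (-1) ^ i)).
      ring. rewrite H. ring. }
    unfold g in Hsum. rewrite Hsum.
    unfold g. rewrite Derive_n_comp_opp.
    2:{ apply (loc_ok r0 (- zeta) (S n) Hr). apply Hg; lra. }
    replace (sum_f_R0 (fun m : nat => (t - s) ^ m / INR (Factorial.fact m) * Derive_n f m s) n +
      (- t - - s) ^ S n / INR (Factorial.fact (S n)) * ((-1) ^ S n * Derive_n f (S n) (- zeta)) -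
      sum_f_R0 (fun m : nat => (t - s) ^ m / INR (Factorial.fact m) * Derive_n f m s) n)
      with ((t - s) ^ S n / INR (Factorial.fact (S n)) * Derive_n f (S n) (- zeta)).
    2:{ replace (- t - - s) with ((-1) * (t - s)) by ring. rewrite Rpow_mult_distr.
      assert ((-1) ^ S n * (-1) ^ S n = 1).
      { rewrite <- Rpow_mult_distr. replace (-1 * -1) with 1 by ring. apply pow1. }
      unfold Rdiv. transitivity ((t - s) ^ S n * / INR (Factorial.fact (S n)) * Derive_n f (S n) (- zeta) * ((-1) ^ S n * (-1) ^ S n)).
      rewrite H; ring. ring. }
    assert (Hz' : Rabs (Derive_n f (S n) (- zeta)) <= B).
    { apply HB, Hg; lra. }
    apply fin_bound; assumption.
Qed.
End Taylor.

Lemma lipd (g dg : R -> R) (a b B : R) :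
  (forall u, Rmin a b <= u <= Rmax a b -> is_derive g u (dg u) /\ Rabs (dg u) <= B) ->
  Rabs (g b - g a) <= B * Rabs (b - a).
Proof.
  intros H.
  destruct (MVT_gen g a b dg) as [c [Hc Heq]].
  - intros u Hu. apply H. lra.
  - intros u Hu. apply continuity_pt_filterlim. apply (@ex_derive_continuous R_AbsRing R_NormedModule g u).
    exists (dg u). apply H; exact Hu.
  - rewrite Heq, Rabs_mult. apply Rmult_le_compat_r; [apply Rabs_pos|].
    apply H; exact Hc.
Qed.

Lemma cont_bound (g : R * R -> R) : continuous g (0, 0) ->
  exists d B, 0 < d /\ 0 <= B /\ forall a b, Rabs a < d -> Rabs b < d -> Rabs (g (a, b)) <= B.
Proof.
  intros Hc.
  destruct (proj1 (filterlim_locally g (g (0,0))) Hc (mkposreal 1 Rlt_0_1)) as [e He].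
  exists e, (Rabs (g (0,0)) + 1). split; [apply cond_pos|]. split.
  { pose proof (Rabs_pos (g (0,0))). lra. }
  intros a b Ha Hb.
  assert (Hb' : ball (g (0,0)) 1 (g (a, b))).
  { apply He. split.
    - change (Rabs (a - 0) < e). rewrite Rminus_0_r. exact Ha.
    - change (Rabs (b - 0) < e). rewrite Rminus_0_r. exact Hb. }
  change (Rabs (g (a,b) - g (0,0)) < 1) in Hb'.
  pose proof (Rabs_triang (g (a,b) - g (0,0)) (g (0,0))).
  replace (g (a, b) - g (0, 0) + g (0, 0)) with (g (a,b)) in H by ring. lra.
Qed.

Lemma G_taylor (G : R * R -> R) : smooth_near0 G ->
  exists rho K, 0 < rho /\ 0 <= K /\ forall t1 t2, Rabs t1 < rho -> Rabs t2 < rho ->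
    Rabs (G (t1, t2) - G (0, 0) - t1 * partial1 G (0, 0) - t2 * partial2 G (0, 0))
      <= K * (t1 ^ 2 + t2 ^ 2).
Proof.
  intros [r [Hr HC]].
  set (U := fun p : R * R => Rabs (fst p) < r /\ Rabs (snd p) < r).
  destruct (HC 2%nat) as [_ [HdG [[_ [Hd1 [[H11 _] [H12 _]]]] [_ [Hd2 [_ [H22 _]]]]]]].
  fold U in HdG, Hd1, H11, H12, Hd2, H22.
  assert (U0 : U (0,0)) by (unfold U; simpl; rewrite Rabs_R0; lra).
  destruct (cont_bound _ (H11 _ U0)) as [e1 [B1 [He1 [HB1 Hb1]]]].
  destruct (cont_bound _ (H12 _ U0)) as [e2 [B2 [He2 [HB2 Hb2]]]].
  destruct (cont_bound _ (H22 _ U0)) as [e3 [B3 [He3 [HB3 Hb3]]]].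
  set (rho := Rmin r (Rmin e1 (Rmin e2 e3))).
  set (B := B1 + B2 + B3).
  assert (Hrho : 0 < rho) by (unfold rho; repeat apply Rmin_pos; lra).
  assert (Hr1 : rho <= r) by (unfold rho; apply Rmin_l).
  assert (Hr2 : rho <= e1) by (unfold rho; eapply Rle_trans; [apply Rmin_r|apply Rmin_l]).
  assert (Hr3 : rho <= e2) by (unfold rho; eapply Rle_trans; [apply Rmin_r|];
     eapply Rle_trans; [apply Rmin_r|apply Rmin_l]).
  assert (Hr4 : rho <= e3) by (unfold rho; eapply Rle_trans; [apply Rmin_r|];
     eapply Rle_trans; [apply Rmin_r|apply Rmin_r]).
  exists rho, (2 * B). split; [exact Hrho|]. split; [unfold B; lra|].
  intros t1 t2 Ht1 Ht2.
  assert (Hseg : forall a u, Rmin 0 a <= u <= Rmax 0 a -> Rabs u <= Rabs a).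
  { intros a u Hu. unfold Rmin, Rmax in Hu. destruct (Rle_dec 0 a).
    - rewrite Rabs_right by lra. rewrite Rabs_right by lra. lra.
    - rewrite (Rabs_left a) by lra. apply Rabs_le. lra. }
  set (c1 := partial1 G (0, t2)).
  assert (HA : Rabs ((G (t1, t2) - c1 * t1) - (G (0, t2) - c1 * 0)) <= B * Rabs t1 * Rabs (t1 - 0)).
  { apply (lipd (fun s => G (s, t2) - c1 * s) (fun s => partial1 G (s, t2) - c1)).
    intros u Hu. pose proof (Hseg _ _ Hu) as Hu'.
    assert (UU : U (u, t2)) by (unfold U; simpl; lra).
    split.
    - destruct (HdG _ UU) as [Hx _]. simpl in Hx. apply Derive_correct in Hx.
      assert (H2 : is_derive (fun s : R => c1 * s) u c1) by (auto_derive; [exact I | ring]).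
      exact (is_derive_minus _ _ _ _ _ Hx H2).
    - unfold c1.
      apply Rle_trans with (B1 * Rabs (u - 0)).
      + apply (lipd (fun s => partial1 G (s, t2)) (fun s => partial1 (partial1 G) (s, t2))).
        intros v Hv.
        assert (Hv' : Rabs v <= Rabs u).
        { unfold Rmin, Rmax in Hv. destruct (Rle_dec 0 u).
          - rewrite Rabs_right by lra. rewrite Rabs_right by lra. lra.
          - rewrite (Rabs_left u) by lra. apply Rabs_le. lra. }
        assert (UV : U (v, t2)) by (unfold U; simpl; lra).
        split.
        * destruct (Hd1 _ UV) as [Hx _]. simpl in Hx. apply Derive_correct in Hx. exact Hx.
        * apply Hb1; lra.
      + rewrite Rminus_0_r. apply Rmult_le_compat; try apply Rabs_pos; try lra.
        unfold B; lra. }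
  assert (HBs : Rabs (partial1 G (0, t2) - partial1 G (0, 0)) <= B2 * Rabs (t2 - 0)).
  { apply (lipd (fun s => partial1 G (0, s)) (fun s => partial2 (partial1 G) (0, s))).
    intros v Hv. pose proof (Hseg _ _ Hv) as Hv'.
    assert (UV : U (0, v)) by (unfold U; simpl; rewrite Rabs_R0; lra).
    split.
    * destruct (Hd1 _ UV) as [_ Hx]. simpl in Hx. apply Derive_correct in Hx. exact Hx.
    * apply Hb2; rewrite ?Rabs_R0; lra. }
  set (c2 := partial2 G (0, 0)).
  assert (HC' : Rabs ((G (0, t2) - c2 * t2) - (G (0, 0) - c2 * 0)) <= B * Rabs t2 * Rabs (t2 - 0)).
  { apply (lipd (fun s => G (0, s) - c2 * s) (fun s => partial2 G (0, s) - c2)).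
    intros u Hu. pose proof (Hseg _ _ Hu) as Hu'.
    assert (UU : U (0, u)) by (unfold U; simpl; rewrite Rabs_R0; lra).
    split.
    - destruct (HdG _ UU) as [_ Hx]. simpl in Hx. apply Derive_correct in Hx.
      assert (H2 : is_derive (fun s : R => c2 * s) u c2) by (auto_derive; [exact I | ring]).
      exact (is_derive_minus _ _ _ _ _ Hx H2).
    - unfold c2.
      apply Rle_trans with (B3 * Rabs (u - 0)).
      + apply (lipd (fun s => partial2 G (0, s)) (fun s => partial2 (partial2 G) (0, s))).
        intros v Hv.
        assert (Hv' : Rabs v <= Rabs u).
        { unfold Rmin, Rmax in Hv. destruct (Rle_dec 0 u).
          - rewrite Rabs_right by lra. rewrite Rabs_right by lra. lra.
          - rewrite (Rabs_left u) by lra. apply Rabs_le. lra. }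
        assert (UV : U (0, v)) by (unfold U; simpl; rewrite Rabs_R0; lra).
        split.
        * destruct (Hd2 _ UV) as [_ Hx]. simpl in Hx. apply Derive_correct in Hx. exact Hx.
        * apply Hb3; rewrite ?Rabs_R0; lra.
      + rewrite Rminus_0_r. apply Rmult_le_compat; try apply Rabs_pos; try lra.
        unfold B; lra. }
  rewrite Rminus_0_r in HA, HBs, HC'.
  fold c1 in HBs.
  set (p1 := partial1 G (0, 0)) in *.
  replace (G (t1, t2) - G (0, 0) - t1 * p1 - t2 * c2) with
    (((G (t1, t2) - c1 * t1) - (G (0, t2) - c1 * 0)) + t1 * (c1 - p1)
     + ((G (0, t2) - c2 * t2) - (G (0, 0) - c2 * 0))) by ring.
  assert (HB2' : B2 <= B) by (unfold B; lra).
  pose proof (Rabs_triang (((G (t1, t2) - c1 * t1) - (G (0, t2) - c1 * 0)) + t1 * (c1 - p1))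
     ((G (0, t2) - c2 * t2) - (G (0, 0) - c2 * 0))).
  pose proof (Rabs_triang ((G (t1, t2) - c1 * t1) - (G (0, t2) - c1 * 0)) (t1 * (c1 - p1))).
  rewrite Rabs_mult in H0.
  assert (Rabs t1 * Rabs (c1 - p1) <= Rabs t1 * (B * Rabs t2)).
  { apply Rmult_le_compat_l; [apply Rabs_pos|]. apply Rle_trans with (B2 * Rabs t2); [lra|].
    apply Rmult_le_compat_r; [apply Rabs_pos|lra]. }
  assert (Rabs t1 * Rabs t1 = t1 ^ 2) by (rewrite <- Rabs_mult; rewrite Rabs_right; [ring| nra]).
  assert (Rabs t2 * Rabs t2 = t2 ^ 2) by (rewrite <- Rabs_mult; rewrite Rabs_right; [ring| nra]).
  assert (Rabs t1 * Rabs t2 <= (t1 ^ 2 + t2 ^ 2)) by (pose proof (Rabs_pos t1); pose proof (Rabs_pos t2); nra).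
  assert (0 <= B) by (unfold B; lra).
  nra.
Qed.

Section Oc.
Variable alpha : R.
Variable Pd : R -> Prop.

Definition near (Q : R -> Prop) := exists r, 0 < r /\ forall x, Pd x -> Rabs (x - alpha) < r -> Q x.

Definition Ok (k : nat) (q : R -> R) :=
  exists C, 0 <= C /\ near (fun x => Rabs (q x) <= C * Rabs (x - alpha) ^ k).

Definition LB (q : R -> R) := exists m, 0 < m /\ near (fun x => m <= Rabs (q x)).

Lemma near_and P Q : near P -> near Q -> near (fun x => P x /\ Q x).
Proof.
  intros [r1 [H1 P1]] [r2 [H2 P2]]. exists (Rmin r1 r2). split; [apply Rmin_pos; lra|].
  intros x Hx Hr. split; [apply P1|apply P2]; auto.
  - apply Rlt_le_trans with (1 := Hr), Rmin_l.
  - apply Rlt_le_trans with (1 := Hr), Rmin_r.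
Qed.

Lemma near_mono (P Q : R -> Prop) : near P -> (forall x, Pd x -> P x -> Q x) -> near Q.
Proof. intros [r [Hr HP]] H. exists r. split; auto. Qed.

Lemma near_ball r : 0 < r -> near (fun x => Rabs (x - alpha) < r).
Proof. intros Hr. exists r. split; auto. Qed.

Lemma near_Pd : near Pd.
Proof. exists 1. split; [lra|]. auto. Qed.

Lemma Ok_bound k q1 q2 K : Ok k q1 -> near (fun x => Rabs (q2 x) <= K * Rabs (q1 x)) -> Ok k q2.
Proof.
  intros [C [HC H1]] H2. exists (Rabs K * C). split; [apply Rmult_le_pos; auto; apply Rabs_pos|].
  apply (near_mono _ _ (near_and _ _ H1 H2)). intros x _ [A B].
  apply Rle_trans with (1 := B).
  apply Rle_trans with (Rabs K * Rabs (q1 x)).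
  - apply Rmult_le_compat_r; [apply Rabs_pos| apply Rle_abs].
  - rewrite Rmult_assoc. apply Rmult_le_compat_l; [apply Rabs_pos|exact A].
Qed.

Lemma Ok_ext k q1 q2 : Ok k q1 -> near (fun x => q1 x = q2 x) -> Ok k q2.
Proof.
  intros H1 H2. apply (Ok_bound k q1 q2 1 H1). apply (near_mono _ _ H2).
  intros x _ E. rewrite E. lra.
Qed.

Lemma Ok_plus k q1 q2 : Ok k q1 -> Ok k q2 -> Ok k (fun x => q1 x + q2 x).
Proof.
  intros [C1 [HC1 H1]] [C2 [HC2 H2]]. exists (C1 + C2). split; [lra|].
  apply (near_mono _ _ (near_and _ _ H1 H2)). intros x _ [A B].
  pose proof (Rabs_triang (q1 x) (q2 x)). lra.
Qed.

Lemma Ok_opp k q : Ok k q -> Ok k (fun x => - q x).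
Proof.
  intros H. apply (Ok_bound k q _ 1 H). exists 1. split; [lra|]. intros. rewrite Rabs_Ropp. lra.
Qed.

Lemma Ok_minus k q1 q2 : Ok k q1 -> Ok k q2 -> Ok k (fun x => q1 x - q2 x).
Proof. intros H1 H2. apply (Ok_plus k q1 (fun x => - q2 x) H1 (Ok_opp k q2 H2)). Qed.

Lemma Ok_mult k1 k2 q1 q2 : Ok k1 q1 -> Ok k2 q2 -> Ok (k1 + k2) (fun x => q1 x * q2 x).
Proof.
  intros [C1 [HC1 H1]] [C2 [HC2 H2]]. exists (C1 * C2). split; [apply Rmult_le_pos; lra|].
  apply (near_mono _ _ (near_and _ _ H1 H2)). intros x _ [A B].
  rewrite Rabs_mult, pow_add.
  replace (C1 * C2 * (Rabs (x - alpha) ^ k1 * Rabs (x - alpha) ^ k2)) with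
    ((C1 * Rabs (x - alpha) ^ k1) * (C2 * Rabs (x - alpha) ^ k2)) by ring.
  apply Rmult_le_compat; auto; apply Rabs_pos.
Qed.

Lemma Ok_weak k k' q : (k' <= k)%nat -> Ok k q -> Ok k' q.
Proof.
  intros Hk [C [HC H]]. exists C. split; auto.
  apply (near_mono _ _ (near_and _ _ H (near_ball 1 Rlt_0_1))). intros x _ [A B].
  apply Rle_trans with (1 := A). apply Rmult_le_compat_l; auto.
  replace k with (k' + (k - k'))%nat by lia. rewrite pow_add.
  assert (0 <= Rabs (x - alpha) ^ k') by (apply pow_le, Rabs_pos).
  assert (Rabs (x - alpha) ^ (k - k') <= 1).
  { rewrite <- (pow1 (k - k')). apply pow_incr. split; [apply Rabs_pos | lra]. }
  assert (0 <= Rabs (x - alpha) ^ (k - k')) by (apply pow_le, Rabs_pos).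
  nra.
Qed.

Lemma Ok_const c : Ok 0 (fun _ => c).
Proof. exists (Rabs c). split; [apply Rabs_pos|]. exists 1. split; [lra|]. intros. simpl. lra. Qed.

Lemma Ok_e : Ok 1 (fun x => x - alpha).
Proof. exists 1. split; [lra|]. exists 1. split; [lra|]. intros. simpl. lra. Qed.

Lemma Ok_epow k : Ok k (fun x => (x - alpha) ^ k).
Proof. exists 1. split; [lra|]. exists 1. split; [lra|]. intros. rewrite <- RPow_abs. lra. Qed.

Lemma Ok_inv q : LB q -> Ok 0 (fun x => / q x).
Proof.
  intros [m [Hm H]]. exists (/ m). split; [left; apply Rinv_0_lt_compat; lra|].
  apply (near_mono _ _ H). intros x _ A. simpl. rewrite Rmult_1_r.
  assert (q x <> 0). { intro E. rewrite E, Rabs_R0 in A. lra. }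
  rewrite Rabs_inv. apply Rinv_le_contravar; lra.
Qed.

Lemma Ok_div k q1 q2 : Ok k q1 -> LB q2 -> Ok k (fun x => q1 x / q2 x).
Proof.
  intros H1 H2. replace k with (k + 0)%nat by lia. apply (Ok_mult k 0 q1 (fun x => / q2 x) H1).
  apply Ok_inv, H2.
Qed.

Lemma Ok_small q eps : Ok 1 q -> 0 < eps -> near (fun x => Rabs (q x) < eps).
Proof.
  intros [C [HC H]] He.
  apply (near_mono _ _ (near_and _ _ H (near_ball (eps / (C + 1)) ltac:(apply Rdiv_lt_0_compat; lra)))).
  intros x _ [A B]. simpl in A. rewrite Rmult_1_r in A.
  apply Rle_lt_trans with (1 := A).
  assert (Rabs (x - alpha) * (C + 1) < eps).
  { apply Rlt_div_r in B; [exact B|lra]. }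
  pose proof (Rabs_pos (x - alpha)). nra.
Qed.

Lemma LB_of q c : Ok 1 (fun x => q x - c) -> c <> 0 -> LB q.
Proof.
  intros H Hc. assert (Hc' : 0 < Rabs c) by (apply Rabs_pos_lt; auto).
  exists (Rabs c / 2). split; [lra|].
  apply (near_mono _ _ (Ok_small _ (Rabs c / 2) H ltac:(lra))).
  intros x _ A.
  pose proof (Rabs_triang (q x - c) (- q x)).
  replace (q x - c + - q x) with (- c) in H0 by ring. rewrite !Rabs_Ropp in H0. lra.
Qed.

Lemma Ok_of_near k q c : Ok k (fun x => q x - c) -> Ok 0 q.
Proof.
  intros H. apply (Ok_ext 0 (fun x => (q x - c) + c)).
  - apply Ok_plus; [apply (Ok_weak k); [lia|exact H] | apply Ok_const].
  - exists 1. split; [lra|]. intros. ring.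
Qed.

Lemma Ok_comp0 (u h : R -> R) r0 B : Ok 1 (fun x => u x - alpha) -> 0 < r0 ->
  (forall t, Rabs (t - alpha) <= r0 -> Rabs (h t) <= B) -> Ok 0 (fun x => h (u x)).
Proof.
  intros H Hr HB. exists (Rabs B). split; [apply Rabs_pos|].
  apply (near_mono _ _ (Ok_small _ r0 H Hr)). intros x _ A. simpl. rewrite Rmult_1_r.
  apply Rle_trans with B; [apply HB; lra| apply Rle_abs].
Qed.

Lemma Ok_le_e k q : Ok k q -> (1 <= k)%nat -> near (fun x => Rabs (q x) <= 1).
Proof.
  intros H Hk. apply (Ok_weak k 1 q Hk) in H.
  apply (near_mono _ _ (Ok_small _ 1 H Rlt_0_1)). intros; lra.
Qed.

Lemma Ok_mult' k1 k2 k q1 q2 : (k = k1 + k2)%nat -> Ok k1 q1 -> Ok k2 q2 -> Ok k (fun x => q1 x * q2 x).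
Proof. intros E H1 H2. subst k. apply Ok_mult; auto. Qed.

Lemma Ok_pow n k q : Ok k q -> Ok (n * k) (fun x => q x ^ n).
Proof.
  intros Hq. induction n.
  - simpl. apply (Ok_ext 0 (fun _ => 1)); [apply Ok_const|]. exists 1; split; [lra|]. intros; reflexivity.
  - apply (Ok_mult' k (n * k)); [lia | exact Hq | exact IHn].
Qed.

Lemma Ok_abs k q : Ok k q -> Ok k (fun x => Rabs (q x)).
Proof. intros H. apply (Ok_bound k q _ 1 H). exists 1. split; [lra|]. intros. rewrite Rabs_Rabsolu. lra. Qed.

Lemma LB_mult q1 q2 : LB q1 -> LB q2 -> LB (fun x => q1 x * q2 x).
Proof.
  intros [m1 [H1 N1]] [m2 [H2 N2]]. exists (m1 * m2). split; [apply Rmult_lt_0_compat; auto|].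
  apply (near_mono _ _ (near_and _ _ N1 N2)). intros x _ [A B].
  rewrite Rabs_mult. apply Rmult_le_compat; lra.
Qed.

End Oc.

Definition K1f a b c := b * (b - c) / ((a - b) * (a - c) * a).
Definition K2f a b c := (- 3 * b ^ 2 + 2 * b * c + 2 * a * b - a * c) / ((a - b) * (b - c) * b).
Definition K3f a b c := b * (b - a) / ((a - c) * (b - c) * c).
Definition Poly3 fz d p q z t := fz + d * (t - z) + p * (t - z) ^ 2 + q * (t - z) ^ 3.

Lemma psi_alg (f : R -> R) x y z w d p q :
  x - y <> 0 -> z - y <> 0 -> w - y <> 0 -> (x - y) - (z - y) <> 0 ->
  (x - y) - (w - y) <> 0 -> (z - y) - (w - y) <> 0 ->
  psi_of f x y z w = d
   + K1f (x - y) (z - y) (w - y) * ((f x - Poly3 (f z) d p q z x) - (f y - Poly3 (f z) d p q z y))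
   - K2f (x - y) (z - y) (w - y) * (f y - Poly3 (f z) d p q z y)
   + K3f (x - y) (z - y) (w - y) * ((f w - Poly3 (f z) d p q z w) - (f y - Poly3 (f z) d p q z y)).
Proof.
  intros ha hb hc hab hac hbc.
  unfold psi_of, K1f, K2f, K3f, Poly3. cbv zeta.
  field. repeat split; auto.
Qed.

Lemma kr K R0 M t : Rabs R0 <= M * t ^ 4 -> Rabs (K * R0) <= M * Rabs (K * t ^ 4).
Proof.
  intros HR. rewrite !Rabs_mult. rewrite (Rabs_right (t ^ 4)).
  2:{ apply Rle_ge. replace 4%nat with (2 * 2)%nat by lia. rewrite pow_mult. apply pow2_ge_0. }
  assert (0 <= Rabs K) by apply Rabs_pos. nra.
Qed.

Section Kb.
Variables (e W Y Z : R).
Definition bet := W * Y * (Z - 1).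
Definition alp := 1 - e * W * Y.
Definition gam := 1 - e * Y.
Definition mu := 1 - e * W * Y * Z.
Definition nu := 1 - W.
Definition lam := e * Y * Z - 1.
Definition av := e * alp.
Definition bv := e ^ 2 * bet.
Definition cv := e * W * gam.
Definition TT1 := e ^ 4 * bet * W * lam * mu ^ 3 / (nu * alp).
Definition TT2 := e ^ 8 * bet ^ 5 * W * lam / (mu * nu * alp).
Definition TT3 := (- 3 * bv ^ 2 + 2 * bv * cv + 2 * av * bv - av * cv) * e ^ 4 * W ^ 2 * Y ^ 3 * (Z - 1) ^ 3 / (mu * lam).
Definition TT4 := - (e ^ 4 * bet * mu * W ^ 2 * lam ^ 3 / (nu * gam)).
Definition TT5 := - (e ^ 8 * W ^ 3 * Y ^ 5 * (Z - 1) ^ 5 * mu / (nu * lam * gam)).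

Hypotheses (he : e <> 0) (hW : W <> 0) (hY : Y <> 0) (hZ : Z - 1 <> 0)
  (ha : alp <> 0) (hg : gam <> 0) (hm : mu <> 0) (hn : nu <> 0) (hl : lam <> 0).

Lemma ab : av - bv = e * mu. Proof. unfold av, bv, alp, bet, mu. ring. Qed.
Lemma ac : av - cv = e * nu. Proof. unfold av, cv, alp, gam, nu. ring. Qed.
Lemma bc : bv - cv = e * W * lam. Proof. unfold bv, cv, bet, gam, lam. ring. Qed.

Lemma Kbound M Rx Ry Rw : Rabs Rx <= M * (av - bv) ^ 4 -> Rabs Ry <= M * bv ^ 4 ->
  Rabs Rw <= M * (cv - bv) ^ 4 ->
  Rabs (K1f av bv cv * (Rx - Ry) - K2f av bv cv * Ry + K3f av bv cv * (Rw - Ry))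
   <= M * (Rabs TT1 + Rabs TT2 + Rabs TT3 + Rabs TT4 + Rabs TT5).
Proof.
  intros Hx Hy Hw.
  assert (E1 : K1f av bv cv * (av - bv) ^ 4 = TT1).
  { unfold K1f. rewrite ab, ac, bc. unfold TT1, bv, av. field. repeat split; auto. }
  assert (E2 : K1f av bv cv * bv ^ 4 = TT2).
  { unfold K1f. rewrite ab, ac, bc. unfold TT2, bv, av. field. repeat split; auto. }
  assert (E3 : K2f av bv cv * bv ^ 4 = TT3).
  { unfold K2f, TT3. set (N := -3 * bv ^ 2 + 2 * bv * cv + 2 * av * bv - av * cv).
    rewrite ab, bc. unfold bv, bet. field. repeat split; auto. }
  assert (E4 : K3f av bv cv * (cv - bv) ^ 4 = TT4).
  { unfold K3f. replace (cv - bv) with (- (e * W * lam)) by (rewrite <- bc; ring).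
    replace (bv - av) with (- (e * mu)) by (rewrite <- ab; ring).
    rewrite ac, bc. unfold TT4, bv, cv. field. repeat split; auto. }
  assert (E5 : K3f av bv cv * bv ^ 4 = TT5).
  { unfold K3f. replace (bv - av) with (- (e * mu)) by (rewrite <- ab; ring).
    rewrite ac, bc. unfold TT5, bv, cv, bet. field. repeat split; auto. }
  pose proof (kr (K1f av bv cv) Rx M (av - bv) Hx) as B1.
  pose proof (kr (K1f av bv cv) Ry M bv Hy) as B2.
  pose proof (kr (K2f av bv cv) Ry M bv Hy) as B3.
  pose proof (kr (K3f av bv cv) Rw M (cv - bv) Hw) as B4.
  pose proof (kr (K3f av bv cv) Ry M bv Hy) as B5.
  rewrite E1 in B1. rewrite E2 in B2. rewrite E3 in B3. rewrite E4 in B4. rewrite E5 in B5.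
  replace (K1f av bv cv * (Rx - Ry) - K2f av bv cv * Ry + K3f av bv cv * (Rw - Ry))
    with (K1f av bv cv * Rx + - (K1f av bv cv * Ry) + - (K2f av bv cv * Ry) + K3f av bv cv * Rw
          + - (K3f av bv cv * Ry)) by ring.
  set (u1 := K1f av bv cv * Rx) in *. set (u2 := K1f av bv cv * Ry) in *.
  set (u3 := K2f av bv cv * Ry) in *. set (u4 := K3f av bv cv * Rw) in *.
  set (u5 := K3f av bv cv * Ry) in *.
  clearbody u1 u2 u3 u4 u5.
  pose proof (Rabs_triang (u1 + - u2 + - u3 + u4) (- u5)).
  pose proof (Rabs_triang (u1 + - u2 + - u3) u4).
  pose proof (Rabs_triang (u1 + - u2) (- u3)).
  pose proof (Rabs_triang u1 (- u2)).
  rewrite !Rabs_Ropp in *. rewrite !Rmult_plus_distr_l. lra.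
Qed.
End Kb.

Lemma sum1 g : sum_f_R0 g 1 = g 0%nat + g 1%nat. Proof. reflexivity. Qed.
Lemma sum2 g : sum_f_R0 g 2 = g 0%nat + g 1%nat + g 2%nat. Proof. reflexivity. Qed.
Lemma sum3 g : sum_f_R0 g 3 = g 0%nat + g 1%nat + g 2%nat + g 3%nat. Proof. reflexivity. Qed.

Section Main.
Variables (f : R -> R) (alpha kappa : R) (G H : R * R -> R) (r1 r0 B : R).
Hypothesis HD : forall u, Rabs (u - alpha) < r1 -> forall n, ex_derive_n f n u.
Hypothesis Hr0 : 0 < r0.
Hypothesis Hr01 : r0 < r1.
Hypothesis HB0 : 0 <= B.
Hypothesis HBd : forall u, Rabs (u - alpha) <= r0 -> forall k, (1 <= k <= 4)%nat ->
  Rabs (Derive_n f k u) <= B.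
Hypothesis Hroot : f alpha = 0.
Hypothesis Hsimple : Derive_n f 1 alpha <> 0.
Hypothesis Hkappa : kappa <> 0.

Lemma T3 s t : Rabs (s - alpha) <= r0 -> Rabs (t - alpha) <= r0 ->
  Rabs (f t - (f s + (t - s) * Derive_n f 1 s + (t - s) ^ 2 / 2 * Derive_n f 2 s
     + (t - s) ^ 3 / 6 * Derive_n f 3 s)) <= B / 24 * Rabs (t - s) ^ 4.
Proof.
  intros Hs Ht.
  pose proof (taylor_bound f alpha r1 HD 3 s t B r0 Hr01 Hs Ht) as T.
  specialize (T ltac:(intros u Hu; apply HBd; [auto | lia])).
  rewrite sum3 in T. change (Derive_n f 0 s) with (f s) in T.
  replace (INR (Factorial.fact 0)) with 1 in T by (simpl; ring).
  replace (INR (Factorial.fact 1)) with 1 in T by (simpl; ring).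
  replace (INR (Factorial.fact 2)) with 2 in T by (simpl; ring).
  replace (INR (Factorial.fact 3)) with 6 in T by (simpl; ring).
  replace (INR (Factorial.fact 4)) with 24 in T by (simpl; ring).
  replace (f s + (t - s) * Derive_n f 1 s + (t - s) ^ 2 / 2 * Derive_n f 2 s
     + (t - s) ^ 3 / 6 * Derive_n f 3 s) with
    ((t - s) ^ 0 / 1 * f s + (t - s) ^ 1 / 1 * Derive_n f 1 s +
       (t - s) ^ 2 / 2 * Derive_n f 2 s + (t - s) ^ 3 / 6 * Derive_n f 3 s) by field.
  apply Rle_trans with (1 := T). right. field.
Qed.

Lemma T1 s t : Rabs (s - alpha) <= r0 -> Rabs (t - alpha) <= r0 ->
  Rabs (f t - (f s + (t - s) * Derive_n f 1 s)) <= B / 2 * Rabs (t - s) ^ 2.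
Proof.
  intros Hs Ht.
  pose proof (taylor_bound f alpha r1 HD 1 s t B r0 Hr01 Hs Ht) as T.
  specialize (T ltac:(intros u Hu; apply HBd; [auto | lia])).
  rewrite sum1 in T. change (Derive_n f 0 s) with (f s) in T.
  replace (INR (Factorial.fact 0)) with 1 in T by (simpl; ring).
  replace (INR (Factorial.fact 1)) with 1 in T by (simpl; ring).
  replace (INR (Factorial.fact 2)) with 2 in T by (simpl; ring).
  replace (f s + (t - s) * Derive_n f 1 s) with
    ((t - s) ^ 0 / 1 * f s + (t - s) ^ 1 / 1 * Derive_n f 1 s) by field.
  apply Rle_trans with (1 := T). right. field.
Qed.

Definition d1 := Derive_n f 1 alpha.
Definition d2 := Derive_n f 2 alpha / 2.
Definition sg (t : R) := (f t - d1 * (t - alpha) - d2 * (t - alpha) ^ 2) / (t - alpha) ^ 3.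
Definition FF (t : R) := d1 + d2 * (t - alpha) + sg t * (t - alpha) ^ 2.

Lemma fF t : f t = (t - alpha) * FF t.
Proof.
  destruct (Req_dec t alpha) as [E|E].
  - subst t. rewrite Hroot. ring.
  - unfold FF, sg. field. intro E'. apply E. lra.
Qed.

Lemma sg_bound t : Rabs (t - alpha) <= r0 -> Rabs (sg t) <= B / 6.
Proof.
  intros Ht.
  destruct (Req_dec t alpha) as [E|E].
  - subst t. unfold sg. rewrite Rminus_diag, Hroot. replace ((0 - d1 * 0 - d2 * 0 ^ 2) / 0 ^ 3) with 0 by (unfold Rdiv; ring). rewrite Rabs_R0. lra.
  - pose proof (taylor_bound f alpha r1 HD 2 alpha t B r0 Hr01) as T.
    rewrite Rminus_diag, Rabs_R0 in T. specialize (T ltac:(lra) Ht).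
    rewrite sum2 in T. change (Derive_n f 0 alpha) with (f alpha) in T.
    replace (INR (Factorial.fact 0)) with 1 in T by (simpl; ring).
    replace (INR (Factorial.fact 1)) with 1 in T by (simpl; ring).
    replace (INR (Factorial.fact 2)) with 2 in T by (simpl; ring).
    replace (INR (Factorial.fact 3)) with 6 in T by (simpl; ring).
    specialize (T ltac:(intros u Hu; apply HBd; [auto | lia])).
    assert (Hu : 0 < Rabs (t - alpha)) by (apply Rabs_pos_lt; lra).
    assert (Hu3 : 0 < Rabs (t - alpha) ^ 3) by (apply pow_lt; lra).
    unfold sg. unfold Rdiv at 1. rewrite Rabs_mult, Rabs_inv, <- RPow_abs.
    apply (Rmult_le_reg_r (Rabs (t - alpha) ^ 3)); auto.
    rewrite Rmult_assoc, Rinv_l by lra.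
    replace (f t - d1 * (t - alpha) - d2 * (t - alpha) ^ 2) with
      (f t - ((t - alpha) ^ 0 / 1 * f alpha + (t - alpha) ^ 1 / 1 * Derive_n f 1 alpha +
       (t - alpha) ^ 2 / 2 * Derive_n f 2 alpha)).
    2:{ rewrite Hroot. unfold d1, d2. field. }
    rewrite Rmult_1_r. apply Rle_trans with (1 := T). right. field.
Qed.

Lemma FF_alpha : FF alpha = d1.
Proof. unfold FF. rewrite Rminus_diag. ring. Qed.


Definition Pd x := step_defined f kappa G x.
Definition ee (x : R) := x - alpha.
Definition ww x := w_of f kappa x.
Definition yy x := y_of f kappa x.
Definition zz x := z_of f kappa G x.
Definition W x := 1 - kappa * FF x.
Definition Fw x := FF (ww x).
Definition Den x := FF x - W x * Fw x.
Definition Y x := (d2 * (1 - W x) + ee x * (sg x - sg (ww x) * W x ^ 2)) / Den x.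
Definition t1 x := f (yy x) / f x.
Definition t2 x := f (yy x) / f (ww x).
Definition Sx x := kappa * FF x / Den x.
Definition Z x := 1 - Sx x * FF (yy x) * G (t1 x, t2 x).

Lemma Iw x : ww x - alpha = ee x * W x.
Proof. unfold ww, w_of, W, ee. rewrite (fF x). ring. Qed.

Lemma fw_eq x : f (ww x) = ee x * W x * Fw x.
Proof. rewrite fF, Iw. reflexivity. Qed.

Lemma FFdiff x : FF x - Fw x = ee x * (d2 * (1 - W x) + ee x * (sg x - sg (ww x) * W x ^ 2)).
Proof.
  unfold Fw, FF. rewrite Iw. unfold ee. ring.
Qed.

Lemma Pd_nz x : Pd x -> ee x <> 0 /\ FF x <> 0 /\ W x <> 0 /\ Fw x <> 0 /\ Den x <> 0.
Proof.
  intros [h1 [h2 [h3 _]]].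
  rewrite fF in h1. fold (ww x) in h2, h3. rewrite fw_eq in h2, h3. rewrite fF in h3.
  fold (ee x) in h1, h3.
  assert (ee x <> 0) by (intro E; apply h1; rewrite E; ring).
  assert (FF x <> 0) by (intro E; apply h1; rewrite E; ring).
  assert (W x <> 0) by (intro E; apply h2; rewrite E; ring).
  assert (Fw x <> 0) by (intro E; apply h2; rewrite E; ring).
  repeat split; auto.
  intro E. apply h3. unfold Den in E.
  replace (ee x * FF x - ee x * W x * Fw x) with (ee x * (FF x - W x * Fw x)) by ring.
  rewrite E. ring.
Qed.

Lemma alg_y (e a Fx Fwv k d2' sx sw Wv : R) : Wv = 1 - k * Fx ->
  Fx - Fwv = e * (d2' * (1 - Wv) + e * (sx - sw * Wv ^ 2)) -> e <> 0 -> Fx - Wv * Fwv <> 0 ->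
  (e + a) - k * ((e * Fx) ^ 2 / (e * Fx - e * Wv * Fwv)) - a =
  e ^ 2 * Wv * ((d2' * (1 - Wv) + e * (sx - sw * Wv ^ 2)) / (Fx - Wv * Fwv)).
Proof.
  intros HW HF He HD'.
  replace (d2' * (1 - Wv) + e * (sx - sw * Wv ^ 2)) with ((Fx - Fwv) / e) by (rewrite HF; field; auto).
  subst Wv. field.
  split; auto. split; auto. intro E. apply HD'.
  assert (HH0 : e * (Fx - (1 - k * Fx) * Fwv) = 0) by (rewrite <- E; ring).
  apply Rmult_integral in HH0. destruct HH0; [contradiction | assumption].
Qed.

Lemma Iy x : Pd x -> yy x - alpha = ee x ^ 2 * W x * Y x.
Proof.
  intros HP. destruct (Pd_nz x HP) as [he [hF [hW [hFw hD]]]].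
  unfold yy, y_of. fold (ww x). rewrite fw_eq, (fF x). fold (ee x).
  replace x with (ee x + alpha) at 1 by (unfold ee; ring).
  unfold Y, Den. apply (alg_y (ee x) alpha (FF x) (Fw x) kappa d2 (sg x) (sg (ww x)) (W x)); auto. apply FFdiff.
Qed.


Lemma It1 x : Pd x -> t1 x = ee x * W x * Y x * FF (yy x) / FF x.
Proof.
  intros HP. destruct (Pd_nz x HP) as [he [hF [hW [hFw hD]]]].
  unfold t1. rewrite (fF (yy x)), (Iy x HP), (fF x). fold (ee x). field. auto.
Qed.

Lemma It2 x : Pd x -> t2 x = ee x * Y x * FF (yy x) / Fw x.
Proof.
  intros HP. destruct (Pd_nz x HP) as [he [hF [hW [hFw hD]]]].
  unfold t2. rewrite (fF (yy x)), (Iy x HP), fw_eq. field. auto.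
Qed.

Lemma Iz x : Pd x -> zz x - alpha = (yy x - alpha) * Z x.
Proof.
  intros HP. destruct (Pd_nz x HP) as [he [hF [hW [hFw hD]]]].
  unfold zz, z_of. fold (ww x) (yy x).
  change (f (yy x) / f x) with (t1 x). change (f (yy x) / f (ww x)) with (t2 x).
  unfold Z, Sx. rewrite fw_eq, (fF x). fold (ee x).
  rewrite (fF (yy x)). unfold Den in *. field. split; auto.
  intro E. apply hD.
  assert (HH0 : ee x * (FF x - W x * Fw x) = 0) by (rewrite <- E; ring).
  apply Rmult_integral in HH0. destruct HH0; [contradiction | assumption].
Qed.


Local Notation OK := (Ok alpha Pd).
Local Notation NEAR := (near alpha Pd).

Lemma nearP (Q : R -> Prop) : (forall x, Pd x -> Q x) -> NEAR Q.
Proof. intros HQ. apply (near_mono alpha Pd Pd); [apply near_Pd | auto]. Qed.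

Lemma OK_eq k q1 q2 : OK k q1 -> (forall x, Pd x -> q1 x = q2 x) -> OK k q2.
Proof. intros H1 H2. apply (Ok_ext _ _ k q1 q2 H1 (nearP _ H2)). Qed.

Lemma sg_comp (u : R -> R) : OK 1 (fun x => u x - alpha) -> OK 0 (fun x => sg (u x)).
Proof. intros Hu. apply (Ok_comp0 _ _ u sg r0 (B / 6) Hu Hr0). intros; apply sg_bound; auto. Qed.

Lemma FF_comp (u : R -> R) k : (1 <= k)%nat -> OK k (fun x => u x - alpha) ->
  OK k (fun x => FF (u x) - d1).
Proof.
  intros Hk Hu.
  apply (OK_eq k (fun x => (u x - alpha) * (d2 + sg (u x) * (u x - alpha)))).
  - apply (Ok_mult' _ _ k 0); [lia | auto |].
    apply Ok_plus; [apply Ok_const|].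
    apply (Ok_mult' _ _ 0 0); [lia | |]. apply sg_comp. apply (Ok_weak _ _ k); [lia | auto].
    apply (Ok_weak _ _ k); [lia | auto].
  - intros x _. unfold FF. ring.
Qed.

Lemma E_FF1 : OK 1 (fun x => FF x - d1).
Proof. apply (FF_comp (fun x => x)); auto. apply Ok_e. Qed.

Lemma E_FF0 : OK 0 FF.
Proof. apply (Ok_of_near _ _ 1 FF d1 E_FF1). Qed.

Lemma LB_FF : LB alpha Pd FF.
Proof. apply (LB_of _ _ FF d1 E_FF1 Hsimple). Qed.

Lemma E_W0 : OK 0 W.
Proof.
  apply (OK_eq 0 (fun x => 1 - kappa * FF x)); [|intros; reflexivity].
  apply Ok_minus; [apply Ok_const|].
  apply (Ok_mult' _ _ 0 0); [lia | apply Ok_const | apply E_FF0].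
Qed.

Lemma E_wa : OK 1 (fun x => ww x - alpha).
Proof.
  apply (OK_eq 1 (fun x => ee x * W x)); [|intros; symmetry; apply Iw].
  apply (Ok_mult' _ _ 1 0); [lia | |]; [apply Ok_e | apply E_W0].
Qed.

Lemma E_Fw1 : OK 1 (fun x => Fw x - d1).
Proof. apply (FF_comp ww 1); auto. apply E_wa. Qed.

Lemma E_Fw0 : OK 0 Fw.
Proof. apply (Ok_of_near _ _ 1 Fw d1 E_Fw1). Qed.

Lemma LB_Fw : LB alpha Pd Fw.
Proof. apply (LB_of _ _ Fw d1 E_Fw1 Hsimple). Qed.

Lemma E_Den1 : OK 1 (fun x => Den x - kappa * d1 ^ 2).
Proof.
  apply (OK_eq 1 (fun x => (FF x - d1) - W x * (Fw x - d1) + d1 * kappa * (FF x - d1))).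
  - apply Ok_plus; [apply Ok_minus|].
    + apply E_FF1.
    + apply (Ok_mult' _ _ 0 1); [lia | |]; [apply E_W0 | apply E_Fw1].
    + apply (Ok_mult' _ _ 0 1); [lia | |]; [apply Ok_const | apply E_FF1].
  - intros x _. unfold Den, W. ring.
Qed.

Lemma LB_Den : LB alpha Pd Den.
Proof.
  apply (LB_of _ _ Den (kappa * d1 ^ 2) E_Den1).
  apply Rmult_integral_contrapositive_currified; auto. apply pow_nonzero; auto.
Qed.

Lemma E_Y0 : OK 0 Y.
Proof.
  unfold Y. apply Ok_div; [|apply LB_Den].
  apply Ok_plus.
  - apply (Ok_mult' _ _ 0 0); [lia | |]; [apply Ok_const|].
    apply Ok_minus; [apply Ok_const | apply E_W0].
  - apply (Ok_mult' _ _ 0 0); [lia | |].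
    + apply (Ok_weak _ _ 1); [lia | apply Ok_e].
    + apply Ok_minus. apply (sg_comp (fun x => x)). apply Ok_e.
      apply (Ok_mult' _ _ 0 0); [lia | |]. apply sg_comp, E_wa.
      apply (Ok_mult' _ _ 0 0); [lia | |]. apply E_W0.
      apply (Ok_mult' _ _ 0 0); [lia | |]. apply E_W0. apply Ok_const.
Qed.


Definition c2 := d2 / d1.

Lemma OK_e1 : OK 1 ee.
Proof. apply Ok_e. Qed.

Lemma OK_sgx : OK 0 sg.
Proof. apply (sg_comp (fun x => x)), Ok_e. Qed.

Lemma OK_sgw : OK 0 (fun x => sg (ww x)).
Proof. apply sg_comp, E_wa. Qed.

Lemma E_Y1 : OK 1 (fun x => Y x - c2).
Proof.
  apply (OK_eq 1 (fun x => (d2 * kappa * (FF x - d1) - c2 * (Den x - kappa * d1 ^ 2)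
      + ee x * (sg x - sg (ww x) * W x ^ 2)) / Den x)).
  - apply Ok_div; [|apply LB_Den]. apply Ok_plus; [apply Ok_minus|].
    + apply (Ok_mult' _ _ 0 1); [lia | apply Ok_const | apply E_FF1].
    + apply (Ok_mult' _ _ 0 1); [lia | apply Ok_const | apply E_Den1].
    + apply (Ok_mult' _ _ 1 0); [lia | apply OK_e1 |].
      apply Ok_minus; [apply OK_sgx|].
      apply (Ok_mult' _ _ 0 0); [lia | apply OK_sgw |].
      apply (Ok_pow _ _ 2 0 W E_W0).
  - intros x HP. destruct (Pd_nz x HP) as [he [hF [hW [hFw hD]]]].
    unfold Y, c2, Den, W in *. field. auto.
Qed.

Lemma E_Y0' : OK 0 Y.
Proof. apply (Ok_of_near _ _ 1 Y c2 E_Y1). Qed.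

Lemma E_ya : OK 2 (fun x => yy x - alpha).
Proof.
  apply (OK_eq 2 (fun x => ee x ^ 2 * W x * Y x)); [|intros; symmetry; apply Iy; auto].
  apply (Ok_mult' _ _ 2 0); [lia | | apply E_Y0].
  apply (Ok_mult' _ _ 2 0); [lia | | apply E_W0].
  apply (Ok_pow _ _ 2 1 ee OK_e1).
Qed.

Lemma E_Fy : OK 2 (fun x => FF (yy x) - d1).
Proof. apply (FF_comp yy 2); [lia | apply E_ya]. Qed.

Lemma E_Fy0 : OK 0 (fun x => FF (yy x)).
Proof. apply (Ok_of_near _ _ 2 _ d1 E_Fy). Qed.

Lemma E_t1 : OK 1 t1.
Proof.
  apply (OK_eq 1 (fun x => ee x * W x * Y x * FF (yy x) / FF x)); [|intros; symmetry; apply It1; auto].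
  apply Ok_div; [|apply LB_FF].
  apply (Ok_mult' _ _ 1 0); [lia | | apply E_Fy0].
  apply (Ok_mult' _ _ 1 0); [lia | | apply E_Y0].
  apply (Ok_mult' _ _ 1 0); [lia | apply OK_e1 | apply E_W0].
Qed.

Lemma E_t2 : OK 1 t2.
Proof.
  apply (OK_eq 1 (fun x => ee x * Y x * FF (yy x) / Fw x)); [|intros; symmetry; apply It2; auto].
  apply Ok_div; [|apply LB_Fw].
  apply (Ok_mult' _ _ 1 0); [lia | | apply E_Fy0].
  apply (Ok_mult' _ _ 1 0); [lia | apply OK_e1 | apply E_Y0].
Qed.

Lemma G_comp (Gf : R * R -> R) : smooth_near0 Gf -> forall k (a b : R -> R), (1 <= k)%nat ->
  OK k a -> OK k b ->
  OK (2 * k) (fun x => Gf (a x, b x) - Gf (0, 0) - a x * partial1 Gf (0, 0) - b x * partial2 Gf (0, 0)).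
Proof.
  intros HG k a b Hk Ha Hb.
  destruct (G_taylor Gf HG) as [rho [K [Hrho [HK HT]]]].
  apply (Ok_bound _ _ _ (fun x => a x ^ 2 + b x ^ 2) _ K).
  - apply Ok_plus; (replace (2 * k)%nat with (2 * k)%nat by lia); apply Ok_pow; auto.
  - assert (Ha1 := Ok_small _ _ a rho (Ok_weak _ _ k 1 a Hk Ha) Hrho).
    assert (Hb1 := Ok_small _ _ b rho (Ok_weak _ _ k 1 b Hk Hb) Hrho).
    apply (near_mono _ _ _ _ (near_and _ _ _ _ Ha1 Hb1)).
    intros x _ [A1 A2]. apply Rle_trans with (1 := HT _ _ A1 A2).
    apply Rmult_le_compat_l; auto. apply Rle_abs.
Qed.

Lemma G0_comp (Gf : R * R -> R) : smooth_near0 Gf -> forall k (a b : R -> R), (1 <= k)%nat ->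
  OK k a -> OK k b -> OK 0 (fun x => Gf (a x, b x)).
Proof.
  intros HG k a b Hk Ha Hb.
  apply (OK_eq 0 (fun x => (Gf (a x, b x) - Gf (0, 0) - a x * partial1 Gf (0, 0) - b x * partial2 Gf (0, 0))
     + Gf (0, 0) + a x * partial1 Gf (0, 0) + b x * partial2 Gf (0, 0))); [|intros; ring].
  apply Ok_plus; [apply Ok_plus; [apply Ok_plus|]|].
  - apply (Ok_weak _ _ (2 * k)); [lia|]. apply G_comp; auto.
  - apply Ok_const.
  - apply (Ok_mult' _ _ 0 0); [lia | | apply Ok_const]. apply (Ok_weak _ _ k); [lia|auto].
  - apply (Ok_mult' _ _ 0 0); [lia | | apply Ok_const]. apply (Ok_weak _ _ k); [lia|auto].
Qed.

Hypothesis HG : smooth_near0 G.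
Hypothesis HH : smooth_near0 H.

Lemma E_G0 : OK 0 (fun x => G (t1 x, t2 x)).
Proof. apply (G0_comp G HG 1); auto; [apply E_t1 | apply E_t2]. Qed.

Lemma E_Sx0 : OK 0 Sx.
Proof.
  unfold Sx. apply Ok_div; [|apply LB_Den].
  apply (Ok_mult' _ _ 0 0); [lia | apply Ok_const | apply E_FF0].
Qed.

Lemma E_Z0 : OK 0 Z.
Proof.
  unfold Z. apply Ok_minus; [apply Ok_const|].
  apply (Ok_mult' _ _ 0 0); [lia | | apply E_G0].
  apply (Ok_mult' _ _ 0 0); [lia | apply E_Sx0 | apply E_Fy0].
Qed.

Lemma E_za : OK 2 (fun x => zz x - alpha).
Proof.
  apply (OK_eq 2 (fun x => (yy x - alpha) * Z x)); [|intros; symmetry; apply Iz; auto].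
  apply (Ok_mult' _ _ 2 0); [lia | apply E_ya | apply E_Z0].
Qed.


Definition RG x := G (t1 x, t2 x) - 1 - t1 x - t2 x.
Definition A1 x := FF (yy x) ^ 2 * (Y x - c2) / FF x
   + c2 * ((FF (yy x) - d1) * (FF (yy x) + d1) - d1 * (FF x - d1)) / FF x.
Definition A2 x := FF (yy x) ^ 2 * (Y x - c2) / Fw x
   + c2 * ((FF (yy x) - d1) * (FF (yy x) + d1) - d1 * (Fw x - d1)) / Fw x.
Definition Qz x := kappa * FF x * ((d1 - FF (yy x)) - ee x * W x * A1 x - ee x * A2 x)
   + ee x ^ 2 * (sg x - sg (ww x) * W x ^ 3).

Lemma IZ x : Pd x -> Z x = Qz x / Den x - Sx x * FF (yy x) * RG x.
Proof.
  intros HP. destruct (Pd_nz x HP) as [he [hF [hW [hFw hD]]]].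
  unfold Z, RG. set (g := G (t1 x, t2 x)).
  rewrite (It1 x HP), (It2 x HP).
  unfold Qz, A1, A2, Sx, c2.
  unfold Den in *. unfold Fw in *.
  set (FY := FF (yy x)) in *. set (Fx := FF x) in *. set (F2 := FF (ww x)) in *.
  assert (EF2 : F2 = d1 + d2 * (ee x * W x) + sg (ww x) * (ee x * W x) ^ 2).
  { unfold F2, FF. rewrite Iw. reflexivity. }
  assert (EFx : Fx = d1 + d2 * ee x + sg x * ee x ^ 2) by reflexivity.
  assert (EW : W x = 1 - kappa * Fx) by reflexivity.
  clearbody FY Fx F2 g.
  set (Wv := W x) in *. set (e := ee x) in *. clearbody Wv e.
  subst F2. subst Fx. subst Wv.
  field. repeat split; auto.
Qed.


Section Cond.
Hypothesis HG00 : G (0, 0) = 1.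
Hypothesis HG1 : partial1 G (0, 0) = 1.
Hypothesis HG2 : partial2 G (0, 0) = 1.

Lemma E_RG : OK 2 RG.
Proof.
  apply (OK_eq 2 (fun x => G (t1 x, t2 x) - G (0, 0) - t1 x * partial1 G (0, 0) - t2 x * partial2 G (0, 0))).
  - apply (G_comp G HG 1 t1 t2); auto; [apply E_t1 | apply E_t2].
  - intros x _. unfold RG. rewrite HG00, HG1, HG2. ring.
Qed.

Lemma E_A1 : OK 1 A1.
Proof.
  unfold A1. apply Ok_plus; apply Ok_div; try apply LB_FF.
  - apply (Ok_mult' _ _ 0 1); [lia | | apply E_Y1]. apply (Ok_pow _ _ 2 0 _ E_Fy0).
  - apply (Ok_mult' _ _ 0 1); [lia | apply Ok_const |]. apply Ok_minus.
    + apply (Ok_mult' _ _ 1 0); [lia | | ].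
      * apply (Ok_weak _ _ 2); [lia | apply E_Fy].
      * apply Ok_plus; [apply E_Fy0 | apply Ok_const].
    + apply (Ok_mult' _ _ 0 1); [lia | apply Ok_const | apply E_FF1].
Qed.

Lemma E_A2 : OK 1 A2.
Proof.
  unfold A2. apply Ok_plus; apply Ok_div; try apply LB_Fw.
  - apply (Ok_mult' _ _ 0 1); [lia | | apply E_Y1]. apply (Ok_pow _ _ 2 0 _ E_Fy0).
  - apply (Ok_mult' _ _ 0 1); [lia | apply Ok_const |]. apply Ok_minus.
    + apply (Ok_mult' _ _ 1 0); [lia | | ].
      * apply (Ok_weak _ _ 2); [lia | apply E_Fy].
      * apply Ok_plus; [apply E_Fy0 | apply Ok_const].
    + apply (Ok_mult' _ _ 0 1); [lia | apply Ok_const | apply E_Fw1].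
Qed.

Lemma E_Qz : OK 2 Qz.
Proof.
  unfold Qz. apply Ok_plus.
  - apply (Ok_mult' _ _ 0 2); [lia | |].
    + apply (Ok_mult' _ _ 0 0); [lia | apply Ok_const | apply E_FF0].
    + apply Ok_minus; [apply Ok_minus|].
      * apply (OK_eq 2 (fun x => - (FF (yy x) - d1))); [apply Ok_opp, E_Fy | intros; ring].
      * apply (Ok_mult' _ _ 1 1); [lia | | apply E_A1].
        apply (Ok_mult' _ _ 1 0); [lia | apply OK_e1 | apply E_W0].
      * apply (Ok_mult' _ _ 1 1); [lia | apply OK_e1 | apply E_A2].
  - apply (Ok_mult' _ _ 2 0); [lia | apply (Ok_pow _ _ 2 1 _ OK_e1) |].
    apply Ok_minus; [apply OK_sgx|].
    apply (Ok_mult' _ _ 0 0); [lia | apply OK_sgw | apply (Ok_pow _ _ 3 0 W E_W0)].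
Qed.

Lemma E_Z2 : OK 2 Z.
Proof.
  apply (OK_eq 2 (fun x => Qz x / Den x - Sx x * FF (yy x) * RG x)); [|intros; symmetry; apply IZ; auto].
  apply Ok_minus.
  - apply Ok_div; [apply E_Qz | apply LB_Den].
  - apply (Ok_mult' _ _ 0 2); [lia | | apply E_RG].
    apply (Ok_mult' _ _ 0 0); [lia | apply E_Sx0 | apply E_Fy0].
Qed.
End Cond.


Definition psiv x := psi_of f x (yy x) (zz x) (ww x).

Lemma Ia x : Pd x -> x - yy x = av (ee x) (W x) (Y x).
Proof.
  intros HP. replace (x - yy x) with (ee x - (yy x - alpha)) by (unfold ee; ring).
  rewrite (Iy x HP). unfold av, alp. ring.
Qed.

Lemma Ib x : Pd x -> zz x - yy x = bv (ee x) (W x) (Y x) (Z x).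
Proof.
  intros HP. replace (zz x - yy x) with ((zz x - alpha) - (yy x - alpha)) by ring.
  rewrite (Iz x HP), (Iy x HP). unfold bv, bet. ring.
Qed.

Lemma Ic x : Pd x -> ww x - yy x = cv (ee x) (W x) (Y x).
Proof.
  intros HP. replace (ww x - yy x) with ((ww x - alpha) - (yy x - alpha)) by ring.
  rewrite Iw, (Iy x HP). unfold cv, gam. ring.
Qed.

Lemma pow4_abs t : Rabs t ^ 4 = t ^ 4.
Proof.
  rewrite RPow_abs. apply Rabs_right. apply Rle_ge.
  replace 4%nat with (2 * 2)%nat by lia. rewrite pow_mult. apply pow2_ge_0.
Qed.

Lemma Pd_nz2 x : Pd x ->
  alp (ee x) (W x) (Y x) <> 0 /\ Y x <> 0 /\ Z x - 1 <> 0 /\ gam (ee x) (Y x) <> 0 /\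
  mu (ee x) (W x) (Y x) (Z x) <> 0 /\ nu (W x) <> 0 /\ lam (ee x) (Y x) (Z x) <> 0.
Proof.
  intros HP. destruct (Pd_nz x HP) as [he [hF [hW [hFw hD]]]].
  pose proof HP as HP'.
  destruct HP' as [_ [_ [_ [ha [hb [hc [hab [hac [hbc _]]]]]]]]].
  cbv zeta in ha, hb, hc, hab, hac, hbc.
  fold (yy x) (zz x) (ww x) in ha, hb, hc, hab, hac, hbc.
  rewrite (Ia x HP) in ha, hab, hac. rewrite (Ib x HP) in hb, hab, hbc.
  rewrite (Ic x HP) in hc, hac, hbc.
  rewrite ab in hab. rewrite ac in hac. rewrite bc in hbc.
  unfold av, bv, cv, bet in ha, hb, hc.
  repeat split; intro E.
  - apply ha; rewrite E; ring.
  - apply hb; rewrite E; ring.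
  - apply hb; rewrite E; ring.
  - apply hc; rewrite E; ring.
  - apply hab; rewrite E; ring.
  - apply hac; rewrite E; ring.
  - apply hbc; rewrite E; ring.
Qed.

Lemma shift4 d A B0 C : d + A - B0 + C - d = A - B0 + C.
Proof. ring. Qed.

Lemma Tpoly s t : Rabs (s - alpha) <= r0 -> Rabs (t - alpha) <= r0 ->
  Rabs (f t - Poly3 (f s) (Derive_n f 1 s) (Derive_n f 2 s / 2) (Derive_n f 3 s / 6) s t)
   <= B / 24 * (t - s) ^ 4.
Proof.
  intros hs ht. rewrite <- pow4_abs. unfold Poly3.
  replace (f s + Derive_n f 1 s * (t - s) + Derive_n f 2 s / 2 * (t - s) ^ 2 +
     Derive_n f 3 s / 6 * (t - s) ^ 3) with
    (f s + (t - s) * Derive_n f 1 s + (t - s) ^ 2 / 2 * Derive_n f 2 s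
     + (t - s) ^ 3 / 6 * Derive_n f 3 s) by field.
  apply T3; auto.
Qed.

Lemma psi_err x : Pd x -> Rabs (x - alpha) <= r0 -> Rabs (yy x - alpha) <= r0 ->
  Rabs (zz x - alpha) <= r0 -> Rabs (ww x - alpha) <= r0 ->
  Rabs (psiv x - Derive_n f 1 (zz x)) <= B / 24 *
    (Rabs (TT1 (ee x) (W x) (Y x) (Z x)) + Rabs (TT2 (ee x) (W x) (Y x) (Z x))
     + Rabs (TT3 (ee x) (W x) (Y x) (Z x)) + Rabs (TT4 (ee x) (W x) (Y x) (Z x))
     + Rabs (TT5 (ee x) (W x) (Y x) (Z x))).
Proof.
  intros HP hx hy hz hw.
  destruct (Pd_nz x HP) as [he [hF [hW [hFw hD]]]].
  destruct (Pd_nz2 x HP) as [h1 [h2 [h3 [h4 [h5 [h6 h7]]]]]].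
  pose proof HP as HP'.
  destruct HP' as [_ [_ [_ [ha [hb [hc [hab [hac [hbc _]]]]]]]]].
  cbv zeta in ha, hb, hc, hab, hac, hbc.
  fold (yy x) (zz x) (ww x) in ha, hb, hc, hab, hac, hbc.
  unfold psiv.
  rewrite (psi_alg f x (yy x) (zz x) (ww x) (Derive_n f 1 (zz x)) (Derive_n f 2 (zz x) / 2)
     (Derive_n f 3 (zz x) / 6)); auto.
  rewrite (Ia x HP), (Ib x HP), (Ic x HP).
  rewrite shift4.
  apply Kbound; auto.
  - rewrite <- (Ia x HP), <- (Ib x HP). replace (x - yy x - (zz x - yy x)) with (x - zz x) by ring.
    apply Tpoly; auto.
  - rewrite <- (Ib x HP). replace ((zz x - yy x) ^ 4) with ((yy x - zz x) ^ 4) by ring.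
    apply Tpoly; auto.
  - rewrite <- (Ic x HP), <- (Ib x HP). replace (ww x - yy x - (zz x - yy x)) with (ww x - zz x) by ring.
    apply Tpoly; auto.
Qed.


Local Notation LBn := (LB alpha Pd).

Lemma LB_alp : LBn (fun x => alp (ee x) (W x) (Y x)).
Proof.
  apply (LB_of _ _ _ 1); [|lra].
  apply (OK_eq 1 (fun x => - (ee x * W x * Y x))); [|intros; unfold alp; ring].
  apply Ok_opp. apply (Ok_mult' _ _ 1 0); [lia | | apply E_Y0].
  apply (Ok_mult' _ _ 1 0); [lia | apply OK_e1 | apply E_W0].
Qed.

Lemma LB_gam : LBn (fun x => gam (ee x) (Y x)).
Proof.
  apply (LB_of _ _ _ 1); [|lra].
  apply (OK_eq 1 (fun x => - (ee x * Y x))); [|intros; unfold gam; ring].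
  apply Ok_opp. apply (Ok_mult' _ _ 1 0); [lia | apply OK_e1 | apply E_Y0].
Qed.

Lemma LB_mu : LBn (fun x => mu (ee x) (W x) (Y x) (Z x)).
Proof.
  apply (LB_of _ _ _ 1); [|lra].
  apply (OK_eq 1 (fun x => - (ee x * W x * Y x * Z x))); [|intros; unfold mu; ring].
  apply Ok_opp. apply (Ok_mult' _ _ 1 0); [lia | | apply E_Z0].
  apply (Ok_mult' _ _ 1 0); [lia | | apply E_Y0].
  apply (Ok_mult' _ _ 1 0); [lia | apply OK_e1 | apply E_W0].
Qed.

Lemma LB_lam : LBn (fun x => lam (ee x) (Y x) (Z x)).
Proof.
  apply (LB_of _ _ _ (-1)); [|lra].
  apply (OK_eq 1 (fun x => ee x * Y x * Z x)); [|intros; unfold lam; ring].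
  apply (Ok_mult' _ _ 1 0); [lia | | apply E_Z0].
  apply (Ok_mult' _ _ 1 0); [lia | apply OK_e1 | apply E_Y0].
Qed.

Lemma LB_nu : LBn (fun x => nu (W x)).
Proof.
  apply (LB_of _ _ _ (kappa * d1)).
  - apply (OK_eq 1 (fun x => kappa * (FF x - d1))); [|intros; unfold nu, W; ring].
    apply (Ok_mult' _ _ 0 1); [lia | apply Ok_const | apply E_FF1].
  - apply Rmult_integral_contrapositive_currified; auto.
Qed.

Lemma E_bet : OK 0 (fun x => bet (W x) (Y x) (Z x)).
Proof.
  unfold bet. apply (Ok_mult' _ _ 0 0); [lia | | apply Ok_minus; [apply E_Z0 | apply Ok_const]].
  apply (Ok_mult' _ _ 0 0); [lia | apply E_W0 | apply E_Y0].
Qed.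

Lemma E_lam0 : OK 0 (fun x => lam (ee x) (Y x) (Z x)).
Proof.
  unfold lam. apply Ok_minus; [|apply Ok_const].
  apply (Ok_mult' _ _ 0 0); [lia | | apply E_Z0].
  apply (Ok_mult' _ _ 0 0); [lia | apply (Ok_weak _ _ 1); [lia | apply OK_e1] | apply E_Y0].
Qed.

Lemma E_mu0 : OK 0 (fun x => mu (ee x) (W x) (Y x) (Z x)).
Proof.
  unfold mu. apply Ok_minus; [apply Ok_const|].
  apply (Ok_mult' _ _ 0 0); [lia | | apply E_Z0].
  apply (Ok_mult' _ _ 0 0); [lia | | apply E_Y0].
  apply (Ok_mult' _ _ 0 0); [lia | apply (Ok_weak _ _ 1); [lia | apply OK_e1] | apply E_W0].
Qed.

Lemma E_TT1 : OK 4 (fun x => TT1 (ee x) (W x) (Y x) (Z x)).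
Proof.
  unfold TT1. apply Ok_div; [| apply LB_mult; [apply LB_nu | apply LB_alp]].
  apply (Ok_mult' _ _ 4 0); [lia | | apply (Ok_pow _ _ 3 0 _ E_mu0)].
  apply (Ok_mult' _ _ 4 0); [lia | | apply E_lam0].
  apply (Ok_mult' _ _ 4 0); [lia | | apply E_W0].
  apply (Ok_mult' _ _ 4 0); [lia | apply (Ok_pow _ _ 4 1 _ OK_e1) | apply E_bet].
Qed.

Lemma E_TT2 : OK 4 (fun x => TT2 (ee x) (W x) (Y x) (Z x)).
Proof.
  apply (Ok_weak _ _ 8); [lia|].
  unfold TT2. apply Ok_div; [| apply LB_mult; [apply LB_mult; [apply LB_mu | apply LB_nu] | apply LB_alp]].
  apply (Ok_mult' _ _ 8 0); [lia | | apply E_lam0].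
  apply (Ok_mult' _ _ 8 0); [lia | | apply E_W0].
  apply (Ok_mult' _ _ 8 0); [lia | apply (Ok_pow _ _ 8 1 _ OK_e1) | apply (Ok_pow _ _ 5 0 _ E_bet)].
Qed.

Lemma E_av : OK 0 (fun x => av (ee x) (W x) (Y x)).
Proof.
  unfold av, alp. apply (Ok_mult' _ _ 0 0); [lia | apply (Ok_weak _ _ 1); [lia | apply OK_e1] |].
  apply Ok_minus; [apply Ok_const|].
  apply (Ok_mult' _ _ 0 0); [lia | | apply E_Y0].
  apply (Ok_mult' _ _ 0 0); [lia | apply (Ok_weak _ _ 1); [lia | apply OK_e1] | apply E_W0].
Qed.

Lemma E_bv : OK 0 (fun x => bv (ee x) (W x) (Y x) (Z x)).
Proof.
  unfold bv. apply (Ok_mult' _ _ 0 0); [lia | | apply E_bet].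
  apply (Ok_weak _ _ 2); [lia | apply (Ok_pow _ _ 2 1 _ OK_e1)].
Qed.

Lemma E_cv : OK 0 (fun x => cv (ee x) (W x) (Y x)).
Proof.
  unfold cv, gam. apply (Ok_mult' _ _ 0 0); [lia | |].
  - apply (Ok_mult' _ _ 0 0); [lia | apply (Ok_weak _ _ 1); [lia | apply OK_e1] | apply E_W0].
  - apply Ok_minus; [apply Ok_const|].
    apply (Ok_mult' _ _ 0 0); [lia | apply (Ok_weak _ _ 1); [lia | apply OK_e1] | apply E_Y0].
Qed.

Lemma E_TT3 : OK 4 (fun x => TT3 (ee x) (W x) (Y x) (Z x)).
Proof.
  unfold TT3. apply Ok_div; [| apply LB_mult; [apply LB_mu | apply LB_lam]].
  apply (Ok_mult' _ _ 4 0); [lia | | apply (Ok_pow _ _ 3 0); apply Ok_minus; [apply E_Z0 | apply Ok_const]].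
  apply (Ok_mult' _ _ 4 0); [lia | | apply (Ok_pow _ _ 3 0 _ E_Y0)].
  apply (Ok_mult' _ _ 4 0); [lia | | apply (Ok_pow _ _ 2 0 _ E_W0)].
  apply (Ok_mult' _ _ 0 4); [lia | | apply (Ok_pow _ _ 4 1 _ OK_e1)].
  apply Ok_minus; [apply Ok_plus; [apply Ok_plus|]|].
  - apply (Ok_mult' _ _ 0 0); [lia | apply Ok_const | apply (Ok_pow _ _ 2 0 _ E_bv)].
  - apply (Ok_mult' _ _ 0 0); [lia | | apply E_cv].
    apply (Ok_mult' _ _ 0 0); [lia | apply Ok_const | apply E_bv].
  - apply (Ok_mult' _ _ 0 0); [lia | | apply E_bv].
    apply (Ok_mult' _ _ 0 0); [lia | apply Ok_const | apply E_av].
  - apply (Ok_mult' _ _ 0 0); [lia | apply E_av | apply E_cv].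
Qed.

Lemma E_TT4 : OK 4 (fun x => TT4 (ee x) (W x) (Y x) (Z x)).
Proof.
  unfold TT4. apply Ok_opp. apply Ok_div; [| apply LB_mult; [apply LB_nu | apply LB_gam]].
  apply (Ok_mult' _ _ 4 0); [lia | | apply (Ok_pow _ _ 3 0 _ E_lam0)].
  apply (Ok_mult' _ _ 4 0); [lia | | apply (Ok_pow _ _ 2 0 _ E_W0)].
  apply (Ok_mult' _ _ 4 0); [lia | | apply E_mu0].
  apply (Ok_mult' _ _ 4 0); [lia | apply (Ok_pow _ _ 4 1 _ OK_e1) | apply E_bet].
Qed.

Lemma E_TT5 : OK 4 (fun x => TT5 (ee x) (W x) (Y x) (Z x)).
Proof.
  apply (Ok_weak _ _ 8); [lia|].
  unfold TT5. apply Ok_opp. apply Ok_div; [| apply LB_mult; [apply LB_mult; [apply LB_nu | apply LB_lam] | apply LB_gam]].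
  apply (Ok_mult' _ _ 8 0); [lia | | apply E_mu0].
  apply (Ok_mult' _ _ 8 0); [lia | | apply (Ok_pow _ _ 5 0); apply Ok_minus; [apply E_Z0 | apply Ok_const]].
  apply (Ok_mult' _ _ 8 0); [lia | | apply (Ok_pow _ _ 5 0 _ E_Y0)].
  apply (Ok_mult' _ _ 8 0); [lia | apply (Ok_pow _ _ 8 1 _ OK_e1) | apply (Ok_pow _ _ 3 0 _ E_W0)].
Qed.


Lemma near_prox (u : R -> R) k : (1 <= k)%nat -> OK k (fun x => u x - alpha) ->
  NEAR (fun x => Rabs (u x - alpha) <= r0).
Proof.
  intros Hk Hu. apply (near_mono _ _ _ _ (Ok_small _ _ _ r0 (Ok_weak _ _ k 1 _ Hk Hu) Hr0)).
  intros; lra.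
Qed.

Lemma E_psi : OK 4 (fun x => psiv x - Derive_n f 1 (zz x)).
Proof.
  apply (Ok_bound _ _ _ (fun x => Rabs (TT1 (ee x) (W x) (Y x) (Z x)) + Rabs (TT2 (ee x) (W x) (Y x) (Z x))
     + Rabs (TT3 (ee x) (W x) (Y x) (Z x)) + Rabs (TT4 (ee x) (W x) (Y x) (Z x))
     + Rabs (TT5 (ee x) (W x) (Y x) (Z x))) _ (B / 24)).
  - repeat apply Ok_plus; apply Ok_abs;
      [apply E_TT1 | apply E_TT2 | apply E_TT3 | apply E_TT4 | apply E_TT5].
  - pose proof (near_prox (fun x => x) 1 (le_n 1) (Ok_e _ _)) as N1.
    pose proof (near_prox yy 2 ltac:(lia) E_ya) as N2.
    pose proof (near_prox zz 2 ltac:(lia) E_za) as N3.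
    pose proof (near_prox ww 1 ltac:(lia) E_wa) as N4.
    apply (near_mono _ _ _ _ (near_and _ _ _ _ (near_and _ _ _ _ N1 N2) (near_and _ _ _ _ N3 N4))).
    intros x HP [[A1 A2] [A3 A4]].
    apply Rle_trans with (1 := psi_err x HP A1 A2 A3 A4).
    apply Rmult_le_compat_l; [lra|]. apply Rle_abs.
Qed.

Lemma dz_bound t : Rabs (t - alpha) <= r0 -> Rabs (Derive_n f 1 t - FF t) <= B / 2 * Rabs (t - alpha).
Proof.
  intros Ht.
  destruct (Req_dec t alpha) as [E|E].
  - subst t. rewrite FF_alpha. unfold d1. rewrite !Rminus_diag, !Rabs_R0. lra.
  - assert (Ha : Rabs (alpha - alpha) <= r0) by (rewrite Rminus_diag, Rabs_R0; lra).
    pose proof (T1 t alpha Ht Ha) as T. rewrite Hroot, (fF t) in T.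
    replace (0 - ((t - alpha) * FF t + (alpha - t) * Derive_n f 1 t)) with
      ((t - alpha) * (Derive_n f 1 t - FF t)) in T by ring.
    rewrite Rabs_mult in T. replace (alpha - t) with (- (t - alpha)) in T by ring.
    rewrite Rabs_Ropp in T. replace (Rabs (t - alpha) ^ 2) with (Rabs (t - alpha) * Rabs (t - alpha)) in T by ring.
    assert (Hp : 0 < Rabs (t - alpha)) by (apply Rabs_pos_lt; lra).
    apply (Rmult_le_reg_l (Rabs (t - alpha))); auto. nra.
Qed.

Lemma E_dz k : OK k (fun x => zz x - alpha) -> (1 <= k)%nat ->
  OK k (fun x => Derive_n f 1 (zz x) - FF (zz x)).
Proof.
  intros Hz Hk. apply (Ok_bound _ _ _ _ _ (B / 2) Hz).
  apply (near_mono _ _ _ _ (near_prox zz k Hk Hz)). intros x _ A.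
  apply dz_bound in A. apply Rle_trans with (1 := A). right. reflexivity.
Qed.

Lemma LB_psi : LBn psiv.
Proof.
  apply (LB_of _ _ _ d1); auto.
  apply (OK_eq 1 (fun x => (psiv x - Derive_n f 1 (zz x)) + (Derive_n f 1 (zz x) - FF (zz x))
      + (FF (zz x) - d1))); [|intros; ring].
  apply Ok_plus; [apply Ok_plus|].
  - apply (Ok_weak _ _ 4); [lia | apply E_psi].
  - apply (Ok_weak _ _ 2); [lia|]. apply E_dz; [apply E_za | lia].
  - apply (Ok_weak _ _ 2); [lia|]. apply FF_comp; [lia | apply E_za].
Qed.

Lemma LB_psi_near : OK 1 (fun x => psiv x - d1).
Proof.
  apply (OK_eq 1 (fun x => (psiv x - Derive_n f 1 (zz x)) + (Derive_n f 1 (zz x) - FF (zz x))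
      + (FF (zz x) - d1))); [|intros; ring].
  apply Ok_plus; [apply Ok_plus|].
  - apply (Ok_weak _ _ 4); [lia | apply E_psi].
  - apply (Ok_weak _ _ 2); [lia|]. apply E_dz; [apply E_za | lia].
  - apply (Ok_weak _ _ 2); [lia|]. apply FF_comp; [lia | apply E_za].
Qed.

Definition s1 x := f (zz x) / f x.
Definition s2 x := f (zz x) / f (ww x).

Lemma Istep x : Pd x -> step f kappa G H x - alpha =
  (zz x - alpha) * ((psiv x - FF (zz x) * H (s1 x, s2 x)) / psiv x).
Proof.
  intros HP. assert (hp : psiv x <> 0) by (destruct HP as [_ [_ [_ [_ [_ [_ [_ [_ [_ h]]]]]]]]]; exact h).
  unfold step. cbv zeta. fold (ww x) (yy x) (zz x).
  change (psi_of f x (yy x) (zz x) (ww x)) with (psiv x).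
  change (f (zz x) / f x) with (s1 x). change (f (zz x) / f (ww x)) with (s2 x).
  rewrite (fF (zz x)). field. auto.
Qed.

Lemma Is1 x : Pd x -> s1 x = ee x * W x * Y x * Z x * FF (zz x) / FF x.
Proof.
  intros HP. destruct (Pd_nz x HP) as [he [hF [hW [hFw hD]]]].
  unfold s1. rewrite (fF (zz x)), (Iz x HP), (Iy x HP), (fF x). fold (ee x). field. auto.
Qed.

Lemma Is2 x : Pd x -> s2 x = ee x * Y x * Z x * FF (zz x) / Fw x.
Proof.
  intros HP. destruct (Pd_nz x HP) as [he [hF [hW [hFw hD]]]].
  unfold s2. rewrite (fF (zz x)), (Iz x HP), (Iy x HP), fw_eq. field. auto.
Qed.

Lemma E_zaj j : OK j Z -> OK (2 + j) (fun x => zz x - alpha).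
Proof.
  intros HZ. apply (OK_eq _ (fun x => (yy x - alpha) * Z x)); [|intros; symmetry; apply Iz; auto].
  apply (Ok_mult' _ _ 2 j); [lia | apply E_ya | exact HZ].
Qed.

Lemma E_FFz0 : OK 0 (fun x => FF (zz x)).
Proof. apply (Ok_of_near _ _ 2 _ d1). apply FF_comp; [lia | apply E_za]. Qed.

Lemma E_s1 j : OK j Z -> OK (1 + j) s1.
Proof.
  intros HZ. apply (OK_eq _ (fun x => ee x * W x * Y x * Z x * FF (zz x) / FF x)); [|intros; symmetry; apply Is1; auto].
  apply Ok_div; [|apply LB_FF].
  apply (Ok_mult' _ _ (1 + j) 0); [lia | | apply E_FFz0].
  apply (Ok_mult' _ _ 1 j); [lia | | exact HZ].
  apply (Ok_mult' _ _ 1 0); [lia | | apply E_Y0].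
  apply (Ok_mult' _ _ 1 0); [lia | apply OK_e1 | apply E_W0].
Qed.

Lemma E_s2 j : OK j Z -> OK (1 + j) s2.
Proof.
  intros HZ. apply (OK_eq _ (fun x => ee x * Y x * Z x * FF (zz x) / Fw x)); [|intros; symmetry; apply Is2; auto].
  apply Ok_div; [|apply LB_Fw].
  apply (Ok_mult' _ _ (1 + j) 0); [lia | | apply E_FFz0].
  apply (Ok_mult' _ _ 1 j); [lia | | exact HZ].
  apply (Ok_mult' _ _ 1 0); [lia | apply OK_e1 | apply E_Y0].
Qed.

Lemma E_step2 : OK 2 (fun x => step f kappa G H x - alpha).
Proof.
  apply (OK_eq _ (fun x => (zz x - alpha) * ((psiv x - FF (zz x) * H (s1 x, s2 x)) / psiv x)));
    [|intros; symmetry; apply Istep; auto].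
  apply (Ok_mult' _ _ 2 0); [lia | apply E_za |].
  apply Ok_div; [|apply LB_psi]. apply Ok_minus.
  - apply (Ok_of_near _ _ 1 _ d1). apply LB_psi_near.
  - apply (Ok_mult' _ _ 0 0); [lia | apply E_FFz0 |].
    apply (G0_comp H HH 1); [lia | apply (E_s1 0 E_Z0) | apply (E_s2 0 E_Z0)].
Qed.

Section Cond2.
Hypothesis HG00 : G (0, 0) = 1.
Hypothesis HG1 : partial1 G (0, 0) = 1.
Hypothesis HG2 : partial2 G (0, 0) = 1.
Hypothesis HH00 : H (0, 0) = 1.
Hypothesis HH1 : partial1 H (0, 0) = 0.
Hypothesis HH2 : partial2 H (0, 0) = 0.

Lemma E_step8 : OK 8 (fun x => step f kappa G H x - alpha).
Proof.
  pose proof (E_Z2 HG00 HG1 HG2) as HZ.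
  apply (OK_eq _ (fun x => (zz x - alpha) * ((psiv x - FF (zz x) * H (s1 x, s2 x)) / psiv x)));
    [|intros; symmetry; apply Istep; auto].
  apply (Ok_mult' _ _ 4 4); [lia | apply (E_zaj 2 HZ) |].
  apply Ok_div; [|apply LB_psi].
  apply (OK_eq _ (fun x => (psiv x - Derive_n f 1 (zz x)) + (Derive_n f 1 (zz x) - FF (zz x))
     - FF (zz x) * (H (s1 x, s2 x) - H (0, 0) - s1 x * partial1 H (0, 0) - s2 x * partial2 H (0, 0))));
    [| intros; rewrite HH00, HH1, HH2; ring].
  apply Ok_minus; [apply Ok_plus|].
  - apply E_psi.
  - apply E_dz; [apply (E_zaj 2 HZ) | lia].
  - apply (Ok_mult' _ _ 0 4); [lia | apply E_FFz0 |].
    apply (Ok_weak _ _ (2 * 3)); [lia|].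
    apply (G_comp H HH 3); [lia | apply (E_s1 2 HZ) | apply (E_s2 2 HZ)].
Qed.
End Cond2.

End Main.

Lemma D_ball lo hi alpha : inD lo hi alpha ->
  exists r1, 0 < r1 /\ forall u, Rabs (u - alpha) < r1 -> inD lo hi u.
Proof.
  intros [Hl Hh].
  destruct lo as [l| |]; destruct hi as [h| |]; simpl in Hl, Hh; try contradiction.
  - exists (Rmin (alpha - l) (h - alpha)). split; [apply Rmin_pos; lra|].
    intros u Hu. pose proof (Rmin_l (alpha - l) (h - alpha)). pose proof (Rmin_r (alpha - l) (h - alpha)).
    apply Rabs_lt_between in Hu. unfold inD; simpl; split; lra.
  - exists (alpha - l). split; [lra|]. intros u Hu. apply Rabs_lt_between in Hu.
    unfold inD; simpl; split; [lra|exact I].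
  - exists (h - alpha). split; [lra|]. intros u Hu. apply Rabs_lt_between in Hu.
    unfold inD; simpl; split; [exact I|lra].
  - exists 1. split; [lra|]. intros u Hu. unfold inD; simpl; split; exact I.
Qed.

Lemma cont_bd (g : R -> R) a : ex_derive g a ->
  exists d, 0 < d /\ forall u, Rabs (u - a) < d -> Rabs (g u) <= Rabs (g a) + 1.
Proof.
  intros Hd. pose proof (@ex_derive_continuous R_AbsRing R_NormedModule g a Hd) as Hc.
  destruct (proj1 (filterlim_locally g (g a)) Hc (mkposreal 1 Rlt_0_1)) as [e He].
  exists e. split; [apply cond_pos|]. intros u Hu.
  assert (Hb : ball (g a) 1 (g u)) by (apply He; exact Hu).
  change (Rabs (g u - g a) < 1) in Hb.
  pose proof (Rabs_triang (g u - g a) (g a)).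
  replace (g u - g a + g a) with (g u) in H by ring. lra.
Qed.

Lemma setup_bounds (f : R -> R) alpha r1 : 0 < r1 ->
  (forall u, Rabs (u - alpha) < r1 -> forall n, ex_derive_n f n u) ->
  exists r0 B, 0 < r0 /\ r0 < r1 /\ 0 <= B /\
    forall u, Rabs (u - alpha) <= r0 -> forall k, (1 <= k <= 4)%nat -> Rabs (Derive_n f k u) <= B.
Proof.
  intros Hr1 HD.
  assert (Hex : forall k, ex_derive (Derive_n f k) alpha).
  { intros k. exact (HD alpha ltac:(rewrite Rminus_diag, Rabs_R0; lra) (S k)). }
  destruct (cont_bd _ _ (Hex 1%nat)) as [d1' [Hd1 B1]].
  destruct (cont_bd _ _ (Hex 2%nat)) as [d2' [Hd2 B2]].
  destruct (cont_bd _ _ (Hex 3%nat)) as [d3' [Hd3 B3]].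
  destruct (cont_bd _ _ (Hex 4%nat)) as [d4' [Hd4 B4]].
  set (r0 := Rmin (r1 / 2) (Rmin (d1' / 2) (Rmin (d2' / 2) (Rmin (d3' / 2) (d4' / 2))))).
  assert (Hm1 := Rmin_l (r1 / 2) (Rmin (d1' / 2) (Rmin (d2' / 2) (Rmin (d3' / 2) (d4' / 2))))).
  assert (Hm2 := Rmin_r (r1 / 2) (Rmin (d1' / 2) (Rmin (d2' / 2) (Rmin (d3' / 2) (d4' / 2))))).
  assert (Hm3 := Rmin_l (d1' / 2) (Rmin (d2' / 2) (Rmin (d3' / 2) (d4' / 2)))).
  assert (Hm4 := Rmin_r (d1' / 2) (Rmin (d2' / 2) (Rmin (d3' / 2) (d4' / 2)))).
  assert (Hm5 := Rmin_l (d2' / 2) (Rmin (d3' / 2) (d4' / 2))).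
  assert (Hm6 := Rmin_r (d2' / 2) (Rmin (d3' / 2) (d4' / 2))).
  assert (Hm7 := Rmin_l (d3' / 2) (d4' / 2)).
  assert (Hm8 := Rmin_r (d3' / 2) (d4' / 2)).
  fold r0 in Hm1, Hm2.
  assert (Hr0 : 0 < r0).
  { unfold r0. repeat apply Rmin_pos; lra. }
  set (Bs := (Rabs (Derive_n f 1 alpha) + 1) + (Rabs (Derive_n f 2 alpha) + 1)
           + (Rabs (Derive_n f 3 alpha) + 1) + (Rabs (Derive_n f 4 alpha) + 1)).
  pose proof (Rabs_pos (Derive_n f 1 alpha)). pose proof (Rabs_pos (Derive_n f 2 alpha)).
  pose proof (Rabs_pos (Derive_n f 3 alpha)). pose proof (Rabs_pos (Derive_n f 4 alpha)).
  exists r0, Bs. split; [exact Hr0|]. split; [lra|]. split; [unfold Bs; lra|].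
  intros u Hu k Hk.
  assert (Hk' : k = 1%nat \/ k = 2%nat \/ k = 3%nat \/ k = 4%nat) by lia.
  destruct Hk' as [-> | [-> | [-> | ->]]].
  - assert (Rabs (Derive_n f 1 u) <= Rabs (Derive_n f 1 alpha) + 1) by (apply B1; lra). unfold Bs; lra.
  - assert (Rabs (Derive_n f 2 u) <= Rabs (Derive_n f 2 alpha) + 1) by (apply B2; lra). unfold Bs; lra.
  - assert (Rabs (Derive_n f 3 u) <= Rabs (Derive_n f 3 alpha) + 1) by (apply B3; lra). unfold Bs; lra.
  - assert (Rabs (Derive_n f 4 u) <= Rabs (Derive_n f 4 alpha) + 1) by (apply B4; lra). unfold Bs; lra.
Qed.

Theorem theorem1 (lo hi : Rbar) (f : R -> R) (alpha kappa : R)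
  (G H : R * R -> R)
  (Hf : forall (n : nat) (x : R), inD lo hi x -> ex_derive_n f n x)
  (Halpha : inD lo hi alpha) (Hroot : f alpha = 0)
  (Hsimple : Derive f alpha <> 0)
  (Hkappa : kappa <> 0)
  (HG : smooth_near0 G) (HH : smooth_near0 H) :
  exists delta : R, 0 < delta /\
    forall x : nat -> R,
      Rabs (x O - alpha) < delta ->
      (forall n : nat, x (S n) = step f kappa G H (x n)) ->
      (forall n : nat, step_defined f kappa G (x n)) ->
      is_lim_seq x alpha /\
      (G (0, 0) = 1 -> partial1 G (0, 0) = 1 -> partial2 G (0, 0) = 1 ->
       H (0, 0) = 1 -> partial1 H (0, 0) = 0 -> partial2 H (0, 0) = 0 ->
       exists (C : R) (N : nat), forall n : nat, (N <= n)%nat ->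
         Rabs (x (S n) - alpha) <= C * Rabs (x n - alpha) ^ 8).
Proof.
  destruct (D_ball lo hi alpha Halpha) as [r1 [Hr1 Hball]].
  assert (HD : forall u, Rabs (u - alpha) < r1 -> forall n, ex_derive_n f n u).
  { intros u Hu n. apply Hf, Hball, Hu. }
  destruct (setup_bounds f alpha r1 Hr1 HD) as [r0 [B [Hr0 [Hr01 [HB0 HBd]]]]].
  assert (Hs1 : Derive_n f 1 alpha <> 0) by exact Hsimple.
  destruct (E_step2 f alpha kappa G H r1 r0 B HD Hr0 Hr01 HB0 HBd Hroot Hs1 Hkappa HG HH)
    as [C [HC [r [Hr Hst]]]].
  set (delta := Rmin r (/ (2 * (C + 1)))).
  assert (Hd1 : delta <= r) by apply Rmin_l.
  assert (Hd2 : delta <= / (2 * (C + 1))) by apply Rmin_r.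
  assert (Hdp : 0 < delta) by (apply Rmin_pos; auto; apply Rinv_0_lt_compat; lra).
  exists delta. split; [exact Hdp|].
  intros x H0 Hrec Hdef.
  assert (Hgeo : forall n, Rabs (x n - alpha) <= (/ 2) ^ n * Rabs (x O - alpha)).
  { induction n.
    - simpl. lra.
    - assert (Hle : Rabs (x n - alpha) < delta).
      { apply Rle_lt_trans with (1 := IHn).
        assert ((/ 2) ^ n <= 1) by (rewrite <- (pow1 n); apply pow_incr; lra).
        pose proof (Rabs_pos (x O - alpha)). nra. }
      rewrite Hrec.
      assert (Hs := Hst (x n) (Hdef n) ltac:(lra)).
      simpl in Hs. rewrite Rmult_1_r in Hs.
      assert (C * Rabs (x n - alpha) <= / 2).
      { apply Rle_trans with (C * delta).
        - apply Rmult_le_compat_l; lra.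
        - apply Rle_trans with (C * / (2 * (C + 1))).
          + apply Rmult_le_compat_l; lra.
          + apply (Rmult_le_reg_r (2 * (C + 1))); [lra|].
            rewrite Rmult_assoc, Rinv_l by lra. nra. }
      pose proof (Rabs_pos (x n - alpha)).
      simpl. apply Rle_trans with (1 := Hs).
      apply Rle_trans with (/ 2 * Rabs (x n - alpha)); [nra|].
      rewrite Rmult_assoc. apply Rmult_le_compat_l; lra. }
  assert (Hlim : is_lim_seq x alpha).
  { apply (is_lim_seq_le_le (fun n => alpha - (/ 2) ^ n * Rabs (x O - alpha))
       x (fun n => alpha + (/ 2) ^ n * Rabs (x O - alpha))).
    - intros n. pose proof (Hgeo n) as Hg. apply Rabs_le_between' in Hg. lra.
    - replace (Finite alpha) with (Finite (alpha - 0 * Rabs (x O - alpha))) by (f_equal; ring).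
      apply is_lim_seq_minus'; [apply is_lim_seq_const|].
      apply (is_lim_seq_scal_r (fun n => (/ 2) ^ n) (Rabs (x O - alpha)) 0).
      apply is_lim_seq_geom. rewrite Rabs_right; lra.
    - replace (Finite alpha) with (Finite (alpha + 0 * Rabs (x O - alpha))) by (f_equal; ring).
      apply is_lim_seq_plus'; [apply is_lim_seq_const|].
      apply (is_lim_seq_scal_r (fun n => (/ 2) ^ n) (Rabs (x O - alpha)) 0).
      apply is_lim_seq_geom. rewrite Rabs_right; lra. }
  split; [exact Hlim|].
  intros c1 c2 c3 c4 c5 c6.
  destruct (E_step8 f alpha kappa G H r1 r0 B HD Hr0 Hr01 HB0 HBd Hroot Hs1 Hkappa HG HH
     c1 c2 c3 c4 c5 c6) as [C8 [HC8 [r8 [Hr8 Hst8]]]].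
  destruct (Hlim (fun y => Rabs (y - alpha) < r8)) as [N HN].
  { exists (mkposreal r8 Hr8). intros y Hy. exact Hy. }
  exists C8, N. intros n Hn. rewrite Hrec. apply Hst8; [apply Hdef | apply HN; exact Hn].
Qed.
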